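(* For every simplicial set $X$, the canonical simplicial map $\mathrm{ESd}\,X\to\mathrm{ESd}'X$ is inner anodyne.
   Context: Work classically. $\Delta$ is the simplex category of finite ordinals $[n]$, $n\ge0$. $\mathrm{ESd}\colon\mathrm{sSet}\to\mathrm{sSet}$ is precomposition with the functor $\Delta\to\Delta$, $[n]\mapsto[n]\star[n]=[2n+1]$, $\alpha\mapsto\alpha\star\alpha$; so $(\mathrm{ESd}\,X)_n=X_{2n+1}$. $\mathrm{ESd}'\colon\mathrm{sSet}\to\mathrm{sSet}$ is the left Kan extension along the Yoneda embedding $\Delta\to\mathrm{sSet}$ of $[n]\mapsto N(\mathrm{Fun}([1],[n]))$, the nerve of the poset of pairs $(a\le b)$ in $[n]$ with the product order. The canonical map is the unique colimit-compatible natural transformation which on $X=\Delta^n$ sends a $k$-simplex $f\colon[2k+1]\to[n]$ of $\mathrm{ESd}\,\Delta^n$ to the $k$-simplex $i\mapsto(f(i),f(k+1+i))$ of $N(\mathrm{Fun}([1],[n]))$ (natural in $[n]$). A map of simplicial sets is inner anodyne if it has the left lifting property against all inner fibrations (maps with the right lifting property against the inner horn inclusions $\Lambda^n_k\hookrightarrow\Delta^n$, $0<k<n$). *)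

(* Defs.v *)
From Stdlib Require Import Relations PropExtensionality FunctionalExtensionality
  ProofIrrelevance ClassicalEpsilon.
From mathcomp Require Import all_boot.
From mathcomp Require Import zify.

Set Implicit Arguments.
Unset Strict Implicit.
Unset Printing Implicit Defensive.

(* The simplex category Δ: objects [n] = {0,...,n} (encoded by n : nat), *)

Definition monob (m n : nat) (f : {ffun 'I_m.+1 -> 'I_n.+1}) : bool :=
  [forall i : 'I_m.+1, forall j : 'I_m.+1, (i <= j) ==> (f i <= f j)].

Definition Dmor (m n : nat) := {f : {ffun 'I_m.+1 -> 'I_n.+1} | monob f}.

Lemma monoP (m n : nat) (f : {ffun 'I_m.+1 -> 'I_n.+1}) :
  monob f -> forall i j : 'I_m.+1, i <= j -> f i <= f j.
Proof. by move=> /forallP H i j ij; exact: (implyP (forallP (H i) j) ij). Qed.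

Lemma Did_mono (n : nat) : monob [ffun i : 'I_n.+1 => i].
Proof. by apply/forallP=> i; apply/forallP=> j; rewrite !ffunE; apply/implyP. Qed.

Definition Did (n : nat) : Dmor n n := exist (fun f => monob f) _ (Did_mono n).

Lemma Dcomp_mono (m n p : nat) (g : Dmor n p) (f : Dmor m n) :
  monob [ffun i => sval g (sval f i)].
Proof.
apply/forallP=> i; apply/forallP=> j; apply/implyP=> ij; rewrite !ffunE.
apply: (monoP (valP g)); exact: (monoP (valP f)).
Qed.

Definition Dcomp (m n p : nat) (g : Dmor n p) (f : Dmor m n) : Dmor m p :=
  exist (fun f => monob f) _ (Dcomp_mono g f).

Lemma Dcomp_idl (m n : nat) (f : Dmor m n) : Dcomp (Did n) f = f.
Proof. by apply: val_inj; apply/ffunP=> i; rewrite /= !ffunE. Qed.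

Lemma Dcomp_idr (m n : nat) (f : Dmor m n) : Dcomp f (Did m) = f.
Proof. by apply: val_inj; apply/ffunP=> i; rewrite /= !ffunE. Qed.

Lemma Dcomp_assoc (m n p q : nat) (h : Dmor p q) (g : Dmor n p) (f : Dmor m n) :
  Dcomp h (Dcomp g f) = Dcomp (Dcomp h g) f.
Proof. by apply: val_inj; apply/ffunP=> i; rewrite /= !ffunE. Qed.

Record SSet := {
  sob :> nat -> Type;
  sact : forall m n, Dmor m n -> sob n -> sob m;
  sact_id : forall n (x : sob n), sact (Did n) x = x;
  sact_comp : forall m n p (f : Dmor m n) (g : Dmor n p) (x : sob p),
      sact (Dcomp g f) x = sact f (sact g x)
}.
Arguments sact s {m n} f x.

Record SMap (X Y : SSet) := {
  smap : forall n, X n -> Y n;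
  smap_nat : forall m n (f : Dmor m n) (x : X n),
      smap (sact X f x) = sact Y f (smap x)
}.
Arguments smap {X Y} s {n} x.

Definition Simplex (n : nat) : SSet :=
  {| sob := fun m => Dmor m n;
     sact := fun m k f g => Dcomp g f;
     sact_id := fun k x => Dcomp_idr x;
     sact_comp := fun m k p f g x => Dcomp_assoc x g f |}.

Definition hornb (n k m : nat) (f : Dmor m n) : bool :=
  [exists j : 'I_n.+1, (nat_of_ord j != k) && [forall i : 'I_m.+1, sval f i != j]].

Lemma hornb_comp (n k m p : nat) (g : Dmor m p) (f : Dmor p n) :
  hornb k f -> hornb k (Dcomp f g).
Proof.
move=> /existsP [j /andP [jk /forallP H]]; apply/existsP; exists j.
by rewrite jk /=; apply/forallP=> i; rewrite ffunE.
Qed.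

Definition horn_act (n k m p : nat) (g : Dmor m p)
    (f : {f : Dmor p n | hornb k f}) : {f : Dmor m n | hornb k f} :=
  exist (fun f => hornb k f) _ (hornb_comp g (valP f)).

Lemma horn_act_id (n k p : nat) (f : {f : Dmor p n | hornb k f}) :
  horn_act (Did p) f = f.
Proof. by apply: val_inj; rewrite /= Dcomp_idr. Qed.

Lemma horn_act_comp (n k m p q : nat) (f : Dmor m p) (g : Dmor p q)
    (x : {f : Dmor q n | hornb k f}) :
  horn_act (Dcomp g f) x = horn_act f (horn_act g x).
Proof. by apply: val_inj; rewrite /= Dcomp_assoc. Qed.

Definition Horn (n k : nat) : SSet :=
  {| sob := fun m => {f : Dmor m n | hornb k f};
     sact := fun m p g f => horn_act g f;
     sact_id := fun p x => horn_act_id x;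
     sact_comp := fun m p q f g x => horn_act_comp f g x |}.

Definition horn_incl (n k : nat) : SMap (Horn n k) (Simplex n) :=
  {| smap := fun m (f : Horn n k m) => (sval f : Simplex n m);
     smap_nat := fun m p g f => erefl |}.

Definition llp (A B X Y : SSet) (i : SMap A B) (p : SMap X Y) : Prop :=
  forall (u : SMap A X) (v : SMap B Y),
    (forall m (a : A m), smap p (smap u a) = smap v (smap i a)) ->
    exists h : SMap B X,
      (forall m (a : A m), smap h (smap i a) = smap u a) /\
      (forall m (b : B m), smap p (smap h b) = smap v b).

Definition inner_fibration (X Y : SSet) (p : SMap X Y) : Prop :=
  forall n k : nat, 0 < k -> k < n -> llp (horn_incl n k) p.

Definition inner_anodyne (A B : SSet) (i : SMap A B) : Prop :=
  forall (X Y : SSet) (p : SMap X Y), inner_fibration p -> llp i p.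

(* The join α ⋆ α : [m] ⋆ [m] = [2m+1] -> [2n+1] = [n] ⋆ [n].           *)

Definition joinn (m n : nat) (a : Dmor m n) (i : nat) : nat :=
  if i <= m then nat_of_ord (sval a (inord i)) else sval a (inord (i - m.+1)) + n.+1.

Lemma joinn_bound (m n : nat) (a : Dmor m n) (i : nat) : joinn a i <= (n + n).+1.
Proof.
rewrite /joinn; case: ifP => _; set j := sval a _; have := ltn_ord j; lia.
Qed.

Definition join_fun (m n : nat) (a : Dmor m n) : {ffun 'I_(m + m).+2 -> 'I_(n + n).+2} :=
  [ffun i : 'I_(m + m).+2 => inord (joinn a i)].

Lemma join_funE (m n : nat) (a : Dmor m n) (i : 'I_(m + m).+2) :
  nat_of_ord (join_fun a i) = joinn a i.
Proof. by rewrite ffunE inordK // ltnS joinn_bound. Qed.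

Lemma join_mono (m n : nat) (a : Dmor m n) : monob (join_fun a).
Proof.
apply/forallP=> i; apply/forallP=> j; apply/implyP=> ij.
rewrite !join_funE /joinn.
have Hi := ltn_ord i; have Hj := ltn_ord j.
case: ifP => im; case: ifP => jm.
- apply: (monoP (valP a)); rewrite !inordK; lia.
- set x := sval a _; have := ltn_ord x; lia.
- lia.
- rewrite leq_add2r; apply: (monoP (valP a)); rewrite !inordK; lia.
Qed.

Definition Djoin (m n : nat) (a : Dmor m n) : Dmor (m + m).+1 (n + n).+1 :=
  exist (fun f => monob f) _ (join_mono a).

Lemma Djoin_id (n : nat) : Djoin (Did n) = Did (n + n).+1.
Proof.
apply: val_inj; apply/ffunP=> i; apply: val_inj.
rewrite /= join_funE ffunE /joinn /=; have Hi := ltn_ord i.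
case: ifP => im; rewrite ffunE inordK; lia.
Qed.

Lemma Djoin_comp (m n p : nat) (g : Dmor n p) (f : Dmor m n) :
  Djoin (Dcomp g f) = Dcomp (Djoin g) (Djoin f).
Proof.
apply: val_inj; apply/ffunP=> i; apply: val_inj.
rewrite /= join_funE [in RHS]ffunE !join_funE /joinn /= !ffunE; have Hi := ltn_ord i.
case: ifP => im.
- set x := sval f _; have Hx := ltn_ord x.
  rewrite ifT; last by lia.
  by congr (nat_of_ord (sval g _)); apply: val_inj; rewrite /= inordK //; lia.
- set x := sval f _; have Hx := ltn_ord x.
  rewrite ifF; last by lia.
  by congr (nat_of_ord (sval g _) + _); apply: val_inj; rewrite /= inordK //; lia.
Qed.

(* ESd X : [n] |-> X_{2n+1}, α |-> α ⋆ α  (precomposition with [n] |-> [n] ⋆ [n]). *)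
Definition ESd (X : SSet) : SSet :=
  {| sob := fun n => X (n + n).+1;
     sact := fun m n a x => sact X (Djoin a) x;
     sact_id := fun n x => eq_ind_r (fun d => sact X d x = x) (sact_id x) (Djoin_id n);
     sact_comp := fun m n p f g x =>
       eq_ind_r (fun d => sact X d x = sact X (Djoin f) (sact X (Djoin g) x))
                (sact_comp (Djoin f) (Djoin g) x) (Djoin_comp g f) |}.

(* N(Fun([1],[n])): the nerve of the poset of pairs (a ≤ b) in [n] with  *)
(* the product order.  A k-simplex is a monotone map [k] -> Fun([1],[n]).*)

Definition nfunb (k n : nat) (s : {ffun 'I_k.+1 -> 'I_n.+1 * 'I_n.+1}) : bool :=
  [forall i : 'I_k.+1, (s i).1 <= (s i).2] &&
  [forall i : 'I_k.+1, forall j : 'I_k.+1,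
     (i <= j) ==> (((s i).1 <= (s j).1) && ((s i).2 <= (s j).2))].

Definition NFun (k n : nat) := {s : {ffun 'I_k.+1 -> 'I_n.+1 * 'I_n.+1} | nfunb s}.

Lemma nfun_act_ok (k' k n : nat) (b : Dmor k' k) (s : NFun k n) :
  nfunb [ffun i => sval s (sval b i)].
Proof.
case: s => s /= /andP [/forallP H1 /forallP H2]; apply/andP; split.
  by apply/forallP=> i; rewrite ffunE.
apply/forallP=> i; apply/forallP=> j; apply/implyP=> ij; rewrite !ffunE.
exact: (implyP (forallP (H2 _) _) (monoP (valP b) ij)).
Qed.

Definition nfun_act (k' k n : nat) (b : Dmor k' k) (s : NFun k n) : NFun k' n :=
  exist (fun s => nfunb s) _ (nfun_act_ok b s).

Lemma nfun_act_id (k n : nat) (s : NFun k n) : nfun_act (Did k) s = s.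
Proof. by apply: val_inj; apply/ffunP=> i; rewrite /= !ffunE. Qed.

Lemma nfun_act_comp (m k p n : nat) (f : Dmor m k) (g : Dmor k p) (s : NFun p n) :
  nfun_act (Dcomp g f) s = nfun_act f (nfun_act g s).
Proof. by apply: val_inj; apply/ffunP=> i; rewrite /= !ffunE. Qed.

Definition NFunS (n : nat) : SSet :=
  {| sob := fun k => NFun k n;
     sact := fun k' k b s => nfun_act b s;
     sact_id := fun k s => nfun_act_id s;
     sact_comp := fun m k p f g s => nfun_act_comp f g s |}.

Lemma nfun_map_ok (k n n' : nat) (c : Dmor n n') (s : NFun k n) :
  nfunb [ffun i => (sval c (sval s i).1, sval c (sval s i).2)].
Proof.
case: s => s /= /andP [/forallP H1 /forallP H2]; apply/andP; split.
  by apply/forallP=> i; rewrite ffunE /=; apply: (monoP (valP c)); exact: H1.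
apply/forallP=> i; apply/forallP=> j; apply/implyP=> ij; rewrite !ffunE /=.
have /andP [h1 h2] := implyP (forallP (H2 i) j) ij.
by rewrite !(monoP (valP c)).
Qed.

Definition nfun_map (k n n' : nat) (c : Dmor n n') (s : NFun k n) : NFun k n' :=
  exist (fun s => nfunb s) _ (nfun_map_ok c s).

Lemma nfun_map_nat (n n' : nat) (c : Dmor n n') (k' k : nat) (b : Dmor k' k) (s : NFun k n) :
  nfun_map c (nfun_act b s) = nfun_act b (nfun_map c s).
Proof. by apply: val_inj; apply/ffunP=> i; rewrite /= !ffunE. Qed.

Definition NFunMap (n n' : nat) (c : Dmor n n') : SMap (NFunS n) (NFunS n') :=
  {| smap := fun k (s : NFunS n k) => (nfun_map c s : NFunS n' k);
     smap_nat := fun k' k b s => nfun_map_nat c b s |}.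

Record CoSSet := {
  cobj : nat -> SSet;
  cmap : forall n n', Dmor n n' -> SMap (cobj n) (cobj n');
  cmap_id : forall n k (s : cobj n k), smap (cmap (Did n)) s = s;
  cmap_comp : forall n n' n'' (c : Dmor n n') (d : Dmor n' n'') k (s : cobj n k),
      smap (cmap (Dcomp d c)) s = smap (cmap d) (smap (cmap c) s)
}.
Arguments cmap c0 {n n'} d.

Lemma nfun_map_id (n k : nat) (s : NFun k n) : nfun_map (Did n) s = s.
Proof. by apply: val_inj; apply/ffunP=> i; rewrite /= !ffunE; case: (sval s i). Qed.

Lemma nfun_map_comp (n n' n'' : nat) (c : Dmor n n') (d : Dmor n' n'') k (s : NFun k n) :
  nfun_map (Dcomp d c) s = nfun_map d (nfun_map c s).
Proof. by apply: val_inj; apply/ffunP=> i; rewrite /= !ffunE. Qed.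

Definition NFunCo : CoSSet :=
  {| cobj := NFunS;
     cmap := NFunMap;
     cmap_id := fun n k s => nfun_map_id s;
     cmap_comp := fun n n' n'' c d k s => nfun_map_comp c d s |}.

Definition Quot (T : Type) (E : relation T) := {P : T -> Prop | exists t, P = E t}.

Definition qclass (T : Type) (E : relation T) (t : T) : Quot E :=
  exist (fun P => exists t, P = E t) (E t) (ex_intro _ t erefl).

Definition qrep (T : Type) (E : relation T) (q : Quot E) : T :=
  proj1_sig (constructive_indefinite_description _ (proj2_sig q)).

Lemma qrep_spec (T : Type) (E : relation T) (q : Quot E) : proj1_sig q = E (qrep q).
Proof. exact: (proj2_sig (constructive_indefinite_description _ (proj2_sig q))). Qed.

Lemma qclass_rep (T : Type) (E : relation T) (q : Quot E) : qclass E (qrep q) = q.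
Proof.
case: q (qrep_spec q) => P HP /= e; rewrite /qclass.
move: (ex_intro _ _ _); rewrite -e => H; congr exist; exact: proof_irrelevance.
Qed.

Lemma qclass_eq (T : Type) (E : relation T) (eqE : equivalence T E) (t t' : T) :
  E t t' -> qclass E t = qclass E t'.
Proof.
case: eqE => Er Et Es Htt'.
have e : E t = E t'.
  apply: functional_extensionality => z; apply: propositional_extensionality.
  split=> H; [apply: (Et _ t) => //; exact: Es | exact: (Et _ t')].
rewrite /qclass; move: (ex_intro _ t _) (ex_intro _ t' _); rewrite e => H1 H2.
congr exist; exact: proof_irrelevance.
Qed.

Lemma qrep_class (T : Type) (E : relation T) (eqE : equivalence T E) (t : T) :
  E t (qrep (qclass E t)).
Proof.
have := qrep_spec (qclass E t); rewrite /= => ->; case: eqE => Er _ _; exact: Er.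
Qed.

(* Left Kan extension along the Yoneda embedding Δ -> sSet of a         *)
(* cosimplicial simplicial set F:                                       *)
(*   (Lan F X)_k = ( Σ_n X_n × F([n])_k ) / ~                           *)
(* where ~ is the equivalence relation generated by                     *)
(*   (n, α^* x, s) ~ (m, x, F(α) s)   for α : [n] -> [m], x ∈ X_m,       *)
(* s ∈ F([n])_k   (the coend ∫^n X_n × F([n]), computed levelwise).     *)

Definition LanT (F : CoSSet) (X : SSet) (k : nat) := {n : nat & (X n * cobj F n k)%type}.

Definition LanR (F : CoSSet) (X : SSet) (k : nat) : relation (LanT F X k) :=
  fun t t' => exists (n m : nat) (a : Dmor n m) (x : X m) (s : cobj F n k),
    t = existT _ n (sact X a x, s) /\ t' = existT _ m (x, smap (cmap F a) s).
Arguments LanR : clear implicits.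

Definition LanE (F : CoSSet) (X : SSet) (k : nat) : relation (LanT F X k) :=
  clos_refl_sym_trans _ (LanR F X k).
Arguments LanE : clear implicits.

Lemma LanE_equiv (F : CoSSet) (X : SSet) (k : nat) : equivalence _ (LanE F X k).
Proof.
split.
- move=> t; exact: rst_refl.
- move=> t1 t2 t3; exact: rst_trans.
- move=> t1 t2; exact: rst_sym.
Qed.

Definition lan_shift (F : CoSSet) (X : SSet) (k' k : nat) (b : Dmor k' k)
    (t : LanT F X k) : LanT F X k' :=
  existT _ (projT1 t) ((projT2 t).1, sact (cobj F (projT1 t)) b (projT2 t).2).

Lemma lan_shift_R (F : CoSSet) (X : SSet) (k' k : nat) (b : Dmor k' k) (t t' : LanT F X k) :
  LanR F X k t t' -> LanR F X k' (lan_shift b t) (lan_shift b t').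
Proof.
move=> [n [m [a [x [s [-> ->]]]]]].
exists n, m, a, x, (sact (cobj F n) b s); split => //=.
by rewrite smap_nat.
Qed.

Lemma lan_shift_E (F : CoSSet) (X : SSet) (k' k : nat) (b : Dmor k' k) (t t' : LanT F X k) :
  LanE F X k t t' -> LanE F X k' (lan_shift b t) (lan_shift b t').
Proof.
elim=> [t1 t2 H | t1 | t1 t2 _ IH | t1 t2 t3 _ IH1 _ IH2].
- by apply: rst_step; apply: lan_shift_R.
- exact: rst_refl.
- exact: rst_sym.
- exact: rst_trans IH1 IH2.
Qed.

Definition lan_act (F : CoSSet) (X : SSet) (k' k : nat) (b : Dmor k' k)
    (q : Quot (LanE F X k)) : Quot (LanE F X k') :=
  qclass (LanE F X k') (lan_shift b (qrep q)).

Lemma lan_act_id (F : CoSSet) (X : SSet) (k : nat) (q : Quot (LanE F X k)) :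
  lan_act (Did k) q = q.
Proof.
rewrite /lan_act /lan_shift sact_id; rewrite -[in RHS](qclass_rep q).
by case: (qrep q) => n [x s].
Qed.

Lemma lan_act_comp (F : CoSSet) (X : SSet) (m k p : nat) (f : Dmor m k) (g : Dmor k p)
    (q : Quot (LanE F X p)) :
  lan_act (Dcomp g f) q = lan_act f (lan_act g q).
Proof.
rewrite /lan_act; apply: qclass_eq; first exact: LanE_equiv.
have H := qrep_class (LanE_equiv F X k) (lan_shift g (qrep q)).
have := lan_shift_E f H; rewrite /lan_shift /= sact_comp.
by case: (qrep q) => n [x s].
Qed.

Definition LanY (F : CoSSet) (X : SSet) : SSet :=
  {| sob := fun k => Quot (LanE F X k);
     sact := fun k' k b q => lan_act b q;
     sact_id := fun k q => lan_act_id q;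
     sact_comp := fun m k p f g q => lan_act_comp f g q |}.

Definition ESd' (X : SSet) : SSet := LanY NFunCo X.


(* The canonical map ESd X -> ESd' X.                                   *)
(* On Δ^n it sends f : [2k+1] -> [n] to the k-simplex i |-> (f i, f (k+1+i)) *)
(* of N(Fun([1],[n])); being colimit-compatible, on a general X it sends *)
(* x ∈ X_{2k+1} = (ESd X)_k to the class of (2k+1, x, ι_k), where        *)
(* ι_k = (i |-> (i, k+1+i)) is the image of id_{[2k+1]}.                 *)

Lemma iota_ok (k : nat) :
  nfunb [ffun i : 'I_k.+1 => ((inord i : 'I_(k + k).+2), (inord (k.+1 + i) : 'I_(k + k).+2))].
Proof.
apply/andP; split.
  apply/forallP=> i; rewrite ffunE /=; have Hi := ltn_ord i; rewrite !inordK; lia.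
apply/forallP=> i; apply/forallP=> j; apply/implyP=> ij; rewrite !ffunE /=.
have Hi := ltn_ord i; have Hj := ltn_ord j; rewrite !inordK; lia.
Qed.

Definition iotak (k : nat) : NFun k (k + k).+1 := exist (fun s => nfunb s) _ (iota_ok k).

Lemma iota_nat (k' k : nat) (b : Dmor k' k) :
  nfun_act b (iotak k) = nfun_map (Djoin b) (iotak k').
Proof.
apply: val_inj; apply/ffunP=> i; rewrite /= !ffunE /=.
have Hi := ltn_ord i; set y := sval b i; have Hy := ltn_ord y.
congr pair; apply: val_inj; rewrite /=.
all: rewrite [in RHS]inordK; last by rewrite ltnS joinn_bound.
all: rewrite inordK; last by lia.
- rewrite /joinn inordK; last by lia.
  rewrite ifT; last by lia.
  by congr (nat_of_ord (sval b _)); apply: val_inj; rewrite /= inordK.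
- rewrite /joinn inordK; last by lia.
  rewrite ifF; last by lia.
  rewrite [k.+1 + _]addnC; congr (nat_of_ord (sval b _) + _); apply: val_inj.
  by rewrite /= inordK //; lia.
Qed.

Definition can_fun (X : SSet) (k : nat) (x : ESd X k) : ESd' X k :=
  qclass (LanE NFunCo X k) (existT _ (k + k).+1 (x, iotak k)).

Lemma can_nat (X : SSet) (k' k : nat) (b : Dmor k' k) (x : ESd X k) :
  can_fun (sact (ESd X) b x) = sact (ESd' X) b (can_fun x).
Proof.
rewrite /= /can_fun /lan_act; apply: qclass_eq; first exact: LanE_equiv.
set u := existT _ (k + k).+1 _.
rewrite /LanE; apply: (rst_trans _ _ _ (lan_shift b u)); last first.
  exact: lan_shift_E (qrep_class (LanE_equiv NFunCo X k) u).
apply: rst_step.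
exists (k' + k').+1, (k + k).+1, (Djoin b), x, (iotak k'); split => //=.
by rewrite /lan_shift /= iota_nat.
Qed.

Definition can_map (X : SSet) : SMap (ESd X) (ESd' X) :=
  {| smap := can_fun (X := X);
     smap_nat := fun k' k b x => can_nat b x |}.

(* Main.v *)
From Stdlib Require Import Relations PropExtensionality FunctionalExtensionality
  ProofIrrelevance ClassicalEpsilon Classical.
From mathcomp Require Import all_boot.
From mathcomp Require Import zify.
Require Import Defs.

Set Implicit Arguments.
Unset Strict Implicit.
Unset Printing Implicit Defensive.

Definition cof_fun (n j : nat) : {ffun 'I_n.+1 -> 'I_n.+2} :=
  [ffun i : 'I_n.+1 => inord (if i < j then (i : nat) else i.+1)].

Lemma cofE n j i : nat_of_ord (cof_fun n j i) = if i < j then (i : nat) else i.+1.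
Proof. rewrite ffunE inordK //; have := ltn_ord i; case: ifP; lia. Qed.

Lemma cof_mono n j : monob (cof_fun n j).
Proof.
apply/forallP=> i; apply/forallP=> i'; apply/implyP=> ii'; rewrite !cofE.
case: ifP; case: ifP; lia.
Qed.

Definition cof n j : Dmor n n.+1 := exist (fun f => monob f) _ (cof_mono n j).

Definition coll_fun (n j : nat) : {ffun 'I_n.+2 -> 'I_n.+1} :=
  [ffun v : 'I_n.+2 => inord (minn (if v < j then (v : nat) else v.-1) n)].

Lemma collE n j v : nat_of_ord (coll_fun n j v) = minn (if v < j then (v : nat) else v.-1) n.
Proof. rewrite ffunE inordK //; have := ltn_ord v; case: ifP; lia. Qed.

Lemma coll_mono n j : monob (coll_fun n j).
Proof.
apply/forallP=> i; apply/forallP=> i'; apply/implyP=> ii'; rewrite !collE.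
case: ifP; case: ifP; lia.
Qed.

Definition coll n j : Dmor n.+1 n := exist (fun f => monob f) _ (coll_mono n j).

Lemma cof_coll n j (v : 'I_n.+2) : j < n.+2 -> nat_of_ord v != j ->
  sval (cof n j) (sval (coll n j) v) = v.
Proof.
move=> jn vj; apply: val_inj; rewrite /= cofE collE; have := ltn_ord v.
case: (ltnP v j) => h1; case: ifP => h2; lia.
Qed.

Lemma cof_miss n j (i : 'I_n.+1) : nat_of_ord (sval (cof n j) i) != j.
Proof. rewrite /= cofE; case: ifP; lia. Qed.

Lemma DcompE m n p (g : Dmor n p) (f : Dmor m n) i : sval (Dcomp g f) i = sval g (sval f i).
Proof. by rewrite /= ffunE. Qed.

Lemma DidE n i : sval (Did n) i = i.
Proof. by rewrite /= ffunE. Qed.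

Definition surj m n (f : Dmor m n) := forall l : 'I_n.+1, exists i, sval f i = l.

Lemma miss_factor m n (t : Dmor m n.+1) (j : nat) : j < n.+2 ->
  (forall i, nat_of_ord (sval t i) != j) ->
  t = Dcomp (cof n j) (Dcomp (coll n j) t).
Proof.
move=> jn H; apply: val_inj; apply/ffunP=> i; rewrite !DcompE.
by rewrite (cof_coll jn (H i)).
Qed.

Lemma nonsurj_miss m n (t : Dmor m n) : ~ surj t ->
  exists l : 'I_n.+1, forall i, sval t i != l.
Proof.
move=> H; apply: NNPP => H'; apply: H => l; apply: NNPP => H2.
apply: H'; exists l => i; apply/eqP => e; apply: H2; by exists i.
Qed.

Lemma surj0 m (t : Dmor m 0) : surj t.
Proof. move=> l; exists ord0; apply: val_inj => /=; case: (sval t ord0) => a ha; case: l => b hb /=; lia. Qed.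

Lemma smono_ge m (f : 'I_m.+1 -> 'I_m.+1) :
  (forall i j : 'I_m.+1, i < j -> f i < f j) -> forall i : 'I_m.+1, i <= f i.
Proof.
move=> H i; case: i => i; elim: i => [//|i IH] Hi.
have Hi' : i < m.+1 by lia.
have /= := IH Hi'; have /= := H (Ordinal Hi') (Ordinal Hi) (ltnSn i); lia.
Qed.

Lemma smono_id m (f : 'I_m.+1 -> 'I_m.+1) :
  (forall i j : 'I_m.+1, i < j -> f i < f j) -> forall i : 'I_m.+1, f i = i.
Proof.
move=> H i; apply: val_inj; apply/eqP; rewrite eqn_leq (smono_ge H) andbT.
pose g (x : 'I_m.+1) : 'I_m.+1 := inord (m - f (inord (m - x))).
have gE : forall x : 'I_m.+1, nat_of_ord (g x) = m - f (inord (m - x)).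
  by move=> x; rewrite /g inordK //; lia.
have Hg : forall i j : 'I_m.+1, i < j -> g i < g j.
  move=> a b ab; rewrite !gE.
  have hb := ltn_ord b; have ha := ltn_ord a.
  have := H (inord (m - b)) (inord (m - a)); rewrite !inordK; try lia.
  have := ltn_ord (f (inord (m - a))); have := ltn_ord (f (inord (m - b))); lia.
have := smono_ge Hg (inord (m - i)); rewrite gE.
have e : (inord (m - (inord (m - i) : 'I_m.+1)) : 'I_m.+1) = i.
  apply: val_inj; rewrite /= (inordK (n' := m)); last by have := ltn_ord i; lia.
  rewrite inordK; have := ltn_ord i; lia.
rewrite e inordK; last by lia.
rewrite /=; have := ltn_ord i; have := ltn_ord (f i); lia.
Qed.

Lemma section_mono n m (s : Dmor n m) (d : 'I_m.+1 -> 'I_n.+1) :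
  (forall l, sval s (d l) = l) -> forall l l' : 'I_m.+1, l < l' -> d l < d l'.
Proof.
move=> H l l' ll'; rewrite ltnNge; apply/negP => h.
have := monoP (valP s) h; rewrite !H; lia.
Qed.

Lemma section_ex n m (s : Dmor n m) (i0 : 'I_n.+1) : surj s ->
  exists d : Dmor m n, (forall l, sval s (sval d l) = l) /\ sval d (sval s i0) = i0.
Proof.
move=> Hs.
pose d := [ffun l => if l == sval s i0 then i0 else odflt i0 [pick i | sval s i == l]].
have Hd : forall l, sval s (d l) = l.
  move=> l; rewrite /d ffunE; case: eqP => [->//|_].
  case: pickP => [i /eqP //|/= H]; have [i Hi] := Hs l; by have := H i; rewrite Hi eqxx.
have Hm : monob d.
  apply/forallP=> i; apply/forallP=> j; apply/implyP=> ij.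
  rewrite leq_eqVlt in ij; case/orP: ij => [/eqP/val_inj -> //| ij].
  by apply: ltnW; apply: (section_mono (s := s)).
exists (exist (fun f => monob f) d Hm); split => //=; by rewrite /d ffunE eqxx.
Qed.

Lemma surj_endo_id m (s : Dmor m m) : surj s -> s = Did m.
Proof.
move=> Hs; have [d [Hd _]] := section_ex ord0 Hs.
have Hsd := section_mono Hd.
have did := smono_id Hsd.
apply: val_inj; apply/ffunP => l; rewrite /= ffunE.
by rewrite -{1}(did l) Hd.
Qed.

Lemma Dcomp_surj m n p (g : Dmor n p) (f : Dmor m n) :
  surj g -> surj f -> surj (Dcomp g f).
Proof.
move=> Hg Hf l; have [i Hi] := Hg l; have [i' Hi'] := Hf i.
by exists i'; rewrite /= ffunE Hi' Hi.
Qed.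

Lemma Did_surj n : surj (Did n).
Proof. by move=> l; exists l; rewrite /= ffunE. Qed.

Section EZ.
Variable X : SSet.

Definition nondeg n (x : X n) :=
  forall m (s : Dmor n m) (y : X m), x = sact X s y -> n <= m.

Lemma ez_min n (x : X n) : exists m, (exists (s : Dmor n m) (y : X m), x = sact X s y) /\
   forall m', (exists (s : Dmor n m') (y : X m'), x = sact X s y) -> m <= m'.
Proof.
pose P m := exists (s : Dmor n m) (y : X m), x = sact X s y.
have Pn : P n by exists (Did n), x; rewrite sact_id.
suff : forall k, forall m, m <= k -> P m -> exists m, P m /\ forall m', P m' -> m <= m'.
  by move=> H; exact: (H n n (leqnn n) Pn).
elim=> [|k IH] m Hm Pm.
  exists m; split => // m' _; lia.
case: (classic (exists m', P m' /\ m' < m)) => [[m' [Pm' Hm']]|H].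
  apply: (IH m') => //; lia.
exists m; split => // m' Pm'; rewrite leqNgt; apply/negP => h; apply: H; by exists m'.
Qed.

Lemma nondeg_endo_surj m (y : X m) (t : Dmor m m) (z : X m) :
  nondeg y -> y = sact X t z -> surj t.
Proof.
case: m y t z => [|m] y t z Hy e; first exact: surj0.
apply: NNPP => /nonsurj_miss [l Hl].
rewrite (@miss_factor _ _ t l) 1?sact_comp in e; [|by []|by move=> i; exact: (Hl i)].
have := Hy _ _ _ e; lia.
Qed.

Lemma ez_ex n (x : X n) : exists m (s : Dmor n m) (y : X m),
  x = sact X s y /\ surj s /\ nondeg y.
Proof.
have [m [[s [y e]] Hmin]] := ez_min x.
exists m, s, y; split => //; split.
- case: m s y e Hmin => [|m] s y e Hmin; first exact: surj0.
  apply: NNPP => /nonsurj_miss [l Hl].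
  rewrite (@miss_factor _ _ s l) 1?sact_comp in e; [|by []|by move=> i; exact: (Hl i)].
  have : m.+1 <= m by apply: Hmin; exists (Dcomp (coll m l) s), (sact X (cof m l) y).
  by rewrite ltnn.
- move=> m' s' y' e'; apply: Hmin; exists (Dcomp s' s), y'; by rewrite sact_comp -e'.
Qed.

Lemma sect_eq n m1 m2 (s1 : Dmor n m1) (y1 : X m1) (s2 : Dmor n m2) (y2 : X m2)
  (d : Dmor m1 n) : (forall l, sval s1 (sval d l) = l) ->
  sact X s1 y1 = sact X s2 y2 -> y1 = sact X (Dcomp s2 d) y2.
Proof.
move=> Hd E; rewrite sact_comp -E -sact_comp.
have -> : Dcomp s1 d = Did m1.
  by apply: val_inj; apply/ffunP => l; rewrite DcompE DidE Hd.
by rewrite sact_id.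
Qed.

Lemma ez_uniq n m1 (s1 : Dmor n m1) (y1 : X m1) m2 (s2 : Dmor n m2) (y2 : X m2) :
  surj s1 -> nondeg y1 -> surj s2 -> nondeg y2 -> sact X s1 y1 = sact X s2 y2 ->
  existT (fun m => (Dmor n m * X m)%type) m1 (s1, y1) = existT _ m2 (s2, y2).
Proof.
move=> Hs1 Hy1 Hs2 Hy2 E.
have [d1 [Hd1 _]] := section_ex ord0 Hs1.
have [d2 [Hd2 _]] := section_ex ord0 Hs2.
have e1 := sect_eq Hd1 E.
have e2 := sect_eq Hd2 (esym E).
have h1 := Hy1 _ _ _ e1; have h2 := Hy2 _ _ _ e2.
have em : m1 = m2 by lia.
subst m2.
have := surj_endo_id (nondeg_endo_surj Hy1 e1) => eid.
rewrite eid sact_id in e1; rewrite -e1 in E *; clear e2.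
have -> : s1 = s2; last by [].
apply: val_inj; apply/ffunP => i.
have [d [Hd Hdi]] := section_ex i Hs1.
have e := sect_eq Hd E.
have := surj_endo_id (nondeg_endo_surj Hy1 e) => eid2.
have := f_equal (fun f : Dmor m1 m1 => sval f (sval s1 i)) eid2.
by rewrite /= DcompE DidE Hdi.
Qed.

Definition ez_prop n (x : X n) (p : {m : nat & (Dmor n m * X m)%type}) : Prop :=
  x = sact X (projT2 p).1 (projT2 p).2 /\ surj (projT2 p).1 /\ nondeg (projT2 p).2.

Lemma ez_ex' n (x : X n) : exists p, ez_prop x p.
Proof. have [m [s [y H]]] := ez_ex x; by exists (existT _ m (s, y)). Qed.

Definition ez n (x : X n) : {m : nat & (Dmor n m * X m)%type} :=
  proj1_sig (constructive_indefinite_description _ (ez_ex' x)).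

Lemma ez_spec n (x : X n) : ez_prop x (ez x).
Proof. exact: (proj2_sig (constructive_indefinite_description _ (ez_ex' x))). Qed.

Lemma ez_eq n m (s : Dmor n m) (y : X m) : surj s -> nondeg y ->
  ez (sact X s y) = existT _ m (s, y).
Proof.
move=> Hs Hy; have := ez_spec (sact X s y); rewrite /ez_prop.
case: (ez (sact X s y)) => m' [s' y'] /= [E [Hs' Hy']].
by apply: ez_uniq => //; rewrite -E.
Qed.

Lemma ez_nondeg n (y : X n) : nondeg y -> ez y = existT _ n (Did n, y).
Proof. by move=> Hy; rewrite -{1}(sact_id y); apply: ez_eq => //; exact: Did_surj. Qed.
End EZ.

Section HornExt.
Variables (X' Y' : SSet) (p : SMap X' Y') (B : SSet) (G : SMap B Y').

Lemma horn_ext (Hp : inner_fibration p) n (j : nat) (hj0 : 0 < j) (hjn : j < n) (sig : B n)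
  (sinj : forall k (a b : Dmor k n), sact B a sig = sact B b sig -> a = b)
  (F : forall k, B k -> Prop)
  (Fcl : forall k k' (b : Dmor k' k) t, F k t -> F k' (sact B b t))
  (Fh : forall k (a : Dmor k n), F k (sact B a sig) <-> hornb j a)
  (h : forall k, B k -> X' k)
  (hnat : forall k k' (b : Dmor k' k) t, F k t -> h k' (sact B b t) = sact X' b (h k t))
  (hp : forall k t, F k t -> smap p (h k t) = smap G t) :
  exists h' : forall k, B k -> X' k,
    (forall k t, F k t -> h' k t = h k t) /\
    (forall k k' (b : Dmor k' k) t, (F k t \/ exists a, t = sact B a sig) ->
        h' k' (sact B b t) = sact X' b (h' k t)) /\
    (forall k t, (F k t \/ exists a, t = sact B a sig) -> smap p (h' k t) = smap G t).
Proof.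
have unat : forall k' k (f : Dmor k' k) (x : Horn n j k),
    h k' (sact B (sval (sact (Horn n j) f x)) sig) = sact X' f (h k (sact B (sval x) sig)).
  move=> k' k f x /=; rewrite sact_comp; apply: hnat; apply/Fh; exact: (valP x).
pose u' : SMap (Horn n j) X' := {| smap := fun k (x : Horn n j k) => h k (sact B (sval x) sig);
                                    smap_nat := unat |}.
have vnat : forall k' k (f : Dmor k' k) (x : Simplex n k),
    smap G (sact B (sact (Simplex n) f x) sig) = sact Y' f (smap G (sact B x sig)).
  by move=> k' k f x /=; rewrite sact_comp smap_nat.
pose v' : SMap (Simplex n) Y' := {| smap := fun k (x : Simplex n k) => smap G (sact B x sig);
                                    smap_nat := vnat |}.
have comm : forall k (a : Horn n j k), smap p (smap u' a) = smap v' (smap (horn_incl n j) a).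
  move=> k a /=; apply: hp; apply/Fh; exact: (valP a).
have [L [HL1 HL2]] := Hp n j hj0 hjn u' v' comm.
pose h' := fun k (t : B k) =>
  match excluded_middle_informative (F k t) with
  | left _ => h k t
  | right _ => match excluded_middle_informative (exists a, t = sact B a sig) with
               | left e => smap L (proj1_sig (constructive_indefinite_description _ e))
               | right _ => h k t end end.
have h'F : forall k t, F k t -> h' k t = h k t.
  by move=> k t Ft; rewrite /h'; case: excluded_middle_informative.
have h'S : forall k (a : Dmor k n), h' k (sact B a sig) = smap L a.
  move=> k a; rewrite /h'; case: excluded_middle_informative => [Ft|nF].
    have Ha : hornb j a by apply/Fh.
    have := HL1 k (exist _ a Ha); rewrite /= => ->; by [].
  case: excluded_middle_informative => [e|ne]; last by exfalso; apply: ne; exists a.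
  case: (constructive_indefinite_description _ e) => a' /= Ha'.
  by rewrite (sinj _ _ _ Ha').
exists h'; split => //; split.
- move=> k k' b t [Ft|[a ->]].
    by rewrite !h'F //; [apply: hnat | apply: Fcl].
  rewrite -sact_comp !h'S.
  by rewrite -[Dcomp a b]/(sact (Simplex n) b a) smap_nat.
- move=> k t [Ft|[a ->]]; first by rewrite h'F //; apply: hp.
  by rewrite h'S HL2.
Qed.
End HornExt.

Ltac slia := simpl in *; lia.

Section Chains.
Variable m : nat.
Definition Pt := ('I_m.+1 * 'I_m.+1)%type.

Definition lep (x y : Pt) := (x.1 <= y.1) && (x.2 <= y.2).
Definition chainb (S : {set Pt}) :=
  [forall x in S, x.1 <= x.2] && [forall x in S, forall y in S, lep x y || lep y x].

Lemma chain_diag (S : {set Pt}) (x : Pt) : chainb S -> x \in S -> x.1 <= x.2.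
Proof. by case/andP => /forall_inP H _ /H. Qed.

Lemma chain_cmp (S : {set Pt}) (x : Pt) (y : Pt) : chainb S -> x \in S -> y \in S -> lep x y || lep y x.
Proof. by case/andP => _ /forall_inP H /H /forall_inP H' /H'. Qed.

Lemma chainP (S : {set Pt}) : (forall x, x \in S -> x.1 <= x.2) ->
  (forall x y, x \in S -> y \in S -> lep x y || lep y x) -> chainb S.
Proof.
move=> H1 H2; apply/andP; split; apply/forall_inP => x xS; first exact: H1.
by apply/forall_inP => y yS; apply: H2.
Qed.

Lemma chain_sub (S : {set Pt}) (S' : {set Pt}) : S \subset S' -> chainb S' -> chainb S.
Proof.
move=> sub ch; apply: chainP => [x xS|x y xS yS].
  exact: chain_diag ch (subsetP sub _ xS).
exact: chain_cmp ch (subsetP sub _ xS) (subsetP sub _ yS).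
Qed.

Definition b0 (S : {set Pt}) := m - \max_(x in S) (m - x.2).
Definition pb (S : {set Pt}) := m - \max_(x in S | b0 S < x.1) (m - x.2).

Lemma b0_le (S : {set Pt}) (x : Pt) : x \in S -> b0 S <= x.2.
Proof.
move=> xS; have h : m - x.2 <= \max_(y in S) (m - y.2) by exact: leq_bigmax_cond.
rewrite /b0; have := ltn_ord x.2; slia.
Qed.

Lemma b0_ex (S : {set Pt}) : S != set0 -> exists2 x, x \in S & nat_of_ord x.2 = b0 S.
Proof.
move=> /set0Pn [y yS].
have [z zS e] : {z | z \in S & \max_(x in S) (m - x.2) = m - z.2}.
  by apply: eq_bigmax_cond; rewrite card_gt0; apply/set0Pn; exists y.
exists z => //; rewrite /b0 e; have := ltn_ord z.2; slia.
Qed.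

Lemma b0_char (S : {set Pt}) (y : Pt) : y \in S -> (forall x, x \in S -> y.2 <= x.2) -> b0 S = y.2.
Proof.
move=> yS H; have := b0_le yS; have [x xS <-] : exists2 x, x \in S & nat_of_ord x.2 = b0 S.
  by apply: b0_ex; apply/set0Pn; exists y.
by have := H x xS; slia.
Qed.

Lemma b0_sub (S : {set Pt}) (S' : {set Pt}) : S \subset S' -> S != set0 -> b0 S' <= b0 S.
Proof. by move=> sub /b0_ex [x xS <-]; apply: b0_le; exact: (subsetP sub). Qed.

Lemma b0_lem (S : {set Pt}) : b0 S <= m. Proof. rewrite /b0; slia. Qed.
Lemma pb_lem (S : {set Pt}) : pb S <= m. Proof. rewrite /pb; slia. Qed.

Lemma pb_le (S : {set Pt}) (x : Pt) : x \in S -> b0 S < x.1 -> pb S <= x.2.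
Proof.
move=> xS lt; have h : m - x.2 <= \max_(y in S | b0 S < y.1) (m - y.2) by apply: leq_bigmax_cond; rewrite xS.
rewrite /pb; have := ltn_ord x.2; slia.
Qed.

Lemma pb_ex (S : {set Pt}) (y : Pt) : y \in S -> b0 S < y.1 ->
  exists x, [/\ x \in S, b0 S < x.1 & nat_of_ord x.2 = pb S].
Proof.
move=> yS yl.
set z := [arg max_(i > y | (i \in S) && (b0 S < i.1)) (m - i.2)].
have e : \max_(x in S | b0 S < x.1) (m - x.2) = m - z.2.
  by apply: bigmax_eq_arg; rewrite yS.
have /andP [zS zl] : (z \in S) && (b0 S < z.1) by rewrite /z; case: arg_maxnP => //; rewrite yS yl.
exists z; split => //; rewrite /pb e; have := ltn_ord z.2; slia.
Qed.

Lemma pb_char (S : {set Pt}) (y : Pt) : y \in S -> b0 S < y.1 ->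
  (forall x, x \in S -> b0 S < x.1 -> y.2 <= x.2) -> pb S = y.2.
Proof.
move=> yS yl H; have := pb_le yS yl; have [x [xS xl <-]] := pb_ex yS yl.
by have := H x xS xl; slia.
Qed.

Definition ESdS (S : {set Pt}) := [forall x in S, forall y in S, x.1 <= y.2].
Definition fullS (S : {set Pt}) :=
  [forall v : 'I_m.+1, [exists x in S, (x.1 == v) || (x.2 == v)]].
Definition AS (S : {set Pt}) := ESdS S || ~~ fullS S.
Definition inM (S : {set Pt}) := [&& chainb S, S != set0, fullS S & ~~ ESdS S].
Definition piv (S : {set Pt}) : Pt := (inord (b0 S), inord (pb S)).
Definition bottomb (S : {set Pt}) := inM S && (piv S \notin S).
Definition top (S : {set Pt}) := piv S |: S.
Definition bot (S : {set Pt}) := S :\ piv S.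
Definition keyn (S : {set Pt}) := #|S| * (m.+1 * m.+1) + (m - b0 S) * m.+1 + (m - pb S).

Lemma piv1 (S : {set Pt}) : nat_of_ord (piv S).1 = b0 S.
Proof. by rewrite /= inordK // ltnS b0_lem. Qed.
Lemma piv2 (S : {set Pt}) : nat_of_ord (piv S).2 = pb S.
Proof. by rewrite /= inordK // ltnS pb_lem. Qed.

Lemma piv_eq (S : {set Pt}) (S' : {set Pt}) : b0 S = b0 S' -> pb S = pb S' -> piv S = piv S'.
Proof. by rewrite /piv => -> ->. Qed.

Lemma ESdS_sub (S : {set Pt}) (S' : {set Pt}) : S \subset S' -> ESdS S' -> ESdS S.
Proof.
move=> sub /forall_inP H; apply/forall_inP => x xS; apply/forall_inP => y yS.
by have /forall_inP := H x (subsetP sub _ xS); apply; exact: (subsetP sub).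
Qed.

Lemma fullS_sub (S : {set Pt}) (S' : {set Pt}) : S \subset S' -> fullS S -> fullS S'.
Proof.
move=> sub /forallP H; apply/forallP => v; have /exists_inP [x xS hx] := H v.
by apply/exists_inP; exists x => //; exact: (subsetP sub).
Qed.

Lemma AS_sub (S : {set Pt}) (S' : {set Pt}) : S \subset S' -> AS S' -> AS S.
Proof.
move=> sub /orP [h|h]; apply/orP; [left; exact: ESdS_sub h|right].
by apply: contra h; apply: fullS_sub.
Qed.

Lemma inM_sup (S : {set Pt}) (W : {set Pt}) : inM S -> S \subset W -> ~~ AS W.
Proof.
case/and4P => _ _ fS nE sub; rewrite negb_or negbK (fullS_sub sub fS) andbT.
by apply: contra nE; apply: ESdS_sub.
Qed.

Lemma notAS_inM (W : {set Pt}) : chainb W -> W != set0 -> ~~ AS W -> inM W.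
Proof. by move=> ch ne; rewrite negb_or negbK => /andP [h1 h2]; apply/and4P. Qed.

Lemma inM_over (S : {set Pt}) : inM S -> exists x, x \in S /\ b0 S < x.1.
Proof.
case/and4P => _ _ _ /forall_inPn [x xS /forall_inPn [y yS]]; rewrite -ltnNge => lt.
exists x; split => //; have := b0_le yS; move: lt; simpl; slia.
Qed.

Lemma inM_pb (S : {set Pt}) : inM S -> exists z, [/\ z \in S, b0 S < z.1 & nat_of_ord z.2 = pb S].
Proof. by move=> /inM_over [y [yS yl]]; apply: pb_ex yS yl. Qed.

Lemma inM_b0_pb (S : {set Pt}) : inM S -> b0 S < pb S.
Proof.
move=> H; have [z [zS zl <-]] := inM_pb H.
have := chain_diag (proj1 (andP H)) zS; slia.
Qed.

Lemma inM_cmp (S : {set Pt}) (x : Pt) : inM S -> x \in S ->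
  (if b0 S < x.1 then lep (piv S) x else lep x (piv S)).
Proof.
move=> H xS; rewrite /lep piv1 piv2; case: ifP => xl.
  by rewrite (pb_le xS xl) andbT; slia.
have [z [zS zl ze]] := inM_pb H.
rewrite -ze; have := chain_cmp (proj1 (andP H)) xS zS; rewrite /lep.
case/orP => /andP [h1 h2]; first by apply/andP; split => //; slia.
slia.
Qed.

Lemma b0_top (S : {set Pt}) : inM S -> b0 (top S) = b0 S.
Proof.
move=> H; have [e eS ee] := b0_ex (proj1 (andP (proj2 (andP H)))).
rewrite -ee; apply: b0_char; first by rewrite /top in_setU1 eS orbT.
move=> x; rewrite /top in_setU1 => /orP [/eqP ->|xS]; last by rewrite ee b0_le.
by rewrite piv2 ee; have := inM_b0_pb H; slia.
Qed.

Lemma pb_top (S : {set Pt}) : inM S -> pb (top S) = pb S.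
Proof.
move=> H; have [z [zS zl ze]] := inM_pb H.
rewrite -ze; apply: pb_char; first by rewrite /top in_setU1 zS orbT.
  by rewrite b0_top.
move=> x; rewrite /top in_setU1 b0_top // => /orP [/eqP ->|xS]; first by rewrite piv1; slia.
by move=> xl; rewrite ze pb_le.
Qed.

Lemma piv_top (S : {set Pt}) : inM S -> piv (top S) = piv S.
Proof. by move=> H; apply: piv_eq; [apply: b0_top | apply: pb_top]. Qed.

Lemma top_chain (S : {set Pt}) : inM S -> chainb (top S).
Proof.
move=> H; have ch := proj1 (andP H).
apply: chainP => [x|x y]; rewrite /top !in_setU1.
  case/orP => [/eqP ->|xS]; last exact: chain_diag ch xS.
  by rewrite piv1 piv2; have := inM_b0_pb H; slia.
have cmp := inM_cmp H.
case/orP => [/eqP ->|xS]; case/orP => [/eqP ->|yS].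
- by rewrite /lep !leqnn.
- by have := cmp _ yS; case: ifP => _ ->; rewrite ?orbT.
- by have := cmp _ xS; case: ifP => _ ->; rewrite ?orbT.
- exact: chain_cmp ch xS yS.
Qed.

Lemma top_inM (S : {set Pt}) : inM S -> inM (top S).
Proof.
move=> H; case/and4P: (H) => ch ne fS nE; apply/and4P; split.
- exact: top_chain.
- by apply/set0Pn; exists (piv S); rewrite /top setU11.
- by apply: fullS_sub fS; apply: subsetUr.
- by apply: contra nE; apply: ESdS_sub; apply: subsetUr.
Qed.

Lemma bot_props (S : {set Pt}) : inM S ->
  [/\ inM (bot S), b0 (bot S) = b0 S, pb (bot S) = pb S & piv (bot S) = piv S].
Proof.
move=> H; case/and4P: (H) => ch ne fS nE.
have [e eS ee] := b0_ex ne.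
have [z [zS zl ze]] := inM_pb H.
have hbp := inM_b0_pb H.
have epiv : e != piv S by apply/eqP => ep; have := piv2 S; rewrite -ep ee; slia.
have zpiv : z != piv S by apply/eqP => zp; have := piv1 S; rewrite -zp; slia.
have eB : e \in bot S by rewrite /bot in_setD1 epiv eS.
have zB : z \in bot S by rewrite /bot in_setD1 zpiv zS.
have sub : bot S \subset S by apply: subsetDl.
have hb0 : b0 (bot S) = b0 S.
  rewrite -ee; apply: b0_char => // x xB; rewrite ee; apply: b0_le; exact: (subsetP sub).
have hpb : pb (bot S) = pb S.
  rewrite -ze; apply: pb_char => //; first by rewrite hb0.
  by move=> x xB; rewrite hb0 ze; apply: pb_le; exact: (subsetP sub).
split => //; last by apply: piv_eq.
apply/and4P; split.
- exact: chain_sub sub ch.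
- by apply/set0Pn; exists e.
- apply/forallP => v; have /exists_inP [x xS hx] := forallP fS v.
  case: (x =P piv S) => [xp|xp].
    case/orP: hx => /eqP hx.
      by apply/exists_inP; exists e => //; rewrite -hx xp; apply/orP; right; apply/eqP; apply: val_inj; rewrite /= piv1 ee.
    by apply/exists_inP; exists z => //; rewrite -hx xp; apply/orP; right; apply/eqP; apply: val_inj; rewrite /= piv2 ze.
  by apply/exists_inP; exists x => //; rewrite /bot in_setD1 xS andbT; apply/eqP.
- apply/negP => /forall_inP /(_ z zB) /forall_inP /(_ e eB); rewrite ee; slia.
Qed.

Lemma bot_bottom (S : {set Pt}) : inM S -> bottomb (bot S).
Proof.
move=> H; have [h1 _ _ h4] := bot_props H.
by rewrite /bottomb h1 h4 /bot setD11.
Qed.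

Lemma sub_top_bot (S : {set Pt}) : inM S -> S \subset top (bot S).
Proof.
move=> H; have [_ _ _ h4] := bot_props H; rewrite /top h4.
by apply/subsetP => x xS; rewrite /bot in_setU1 in_setD1 xS andbT orbN.
Qed.

Lemma card_bot (S : {set Pt}) : inM S -> #|bot S| = #|S| - (piv S \in S).
Proof. by move=> _; rewrite /bot [in RHS](cardsD1 (piv S) S) addKn. Qed.

Lemma card_top (S : {set Pt}) : bottomb S -> #|top S| = #|S|.+1.
Proof. by case/andP => _ h; rewrite /top cardsU1 h. Qed.

Lemma keyn_lt (S : {set Pt}) (S' : {set Pt}) :
  #|S| < #|S'| \/ (#|S| = #|S'| /\ (b0 S' < b0 S \/ b0 S = b0 S' /\ pb S' < pb S)) ->
  keyn S < keyn S'.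
Proof.
rewrite /keyn; have := b0_lem S; have := b0_lem S'; have := pb_lem S; have := pb_lem S'.
move: (b0 S) (b0 S') (pb S) (pb S') #|S| #|S'| => a a' b b' s s' h1 h2 h3 h4.
case=> [lt|[-> [lt|[-> lt]]]]; try nia.
Qed.

Lemma keyn_le (S : {set Pt}) (S' : {set Pt}) : keyn S <= keyn S' ->
  #|S| < #|S'| \/ (#|S| = #|S'| /\ (b0 S' < b0 S \/ b0 S = b0 S' /\ pb S' <= pb S)).
Proof.
move=> H.
case: (ltngtP #|S| #|S'|) => [lt|gt|eq]; first by left.
  by exfalso; have := keyn_lt (S := S') (S' := S) (or_introl gt); slia.
right; split => //.
case: (ltngtP (b0 S') (b0 S)) => [lt|gt|eb]; first by left.
  by exfalso; have := keyn_lt (S := S') (S' := S) (or_intror (conj (esym eq) (or_introl gt))); slia.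
right; split => //; rewrite leqNgt; apply/negP => lt.
by have := keyn_lt (S := S') (S' := S) (or_intror (conj (esym eq) (or_intror (conj eb lt)))); slia.
Qed.

Lemma L6 (c : {set Pt}) (c' : {set Pt}) : bottomb c -> bottomb c' -> c \subset top c' -> keyn c' <= keyn c -> c = c'.
Proof.
move=> /andP [Mc pc] /andP [Mc' pc'] sub /keyn_le hk.
have ne : c != set0 by case/and4P: Mc.
case: (boolP (piv c' \in c)) => pin.
  exfalso.
  have hb0 : b0 (top c') <= b0 c := b0_sub sub ne.
  rewrite b0_top // in hb0.
  have hc : #|c| <= #|c'|.
    have := subset_leqif_cards sub; rewrite card_top ?/bottomb ?Mc' ?pc' // => -[le eqv].
    case: (ltngtP #|c| #|c'|.+1) => ec; [done|by move: le; slia|].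
    move: eqv; rewrite ec eqxx => /esym /eqP ect.
    by move: pc; rewrite ect piv_top // /top setU11.
  have hcc : #|c| = #|c'| by case: hk; slia.
  have eb : b0 c = b0 c' by case: hk => [|[_ [|[]]]]; slia.
  have ep : pb c = pb c'.
    have le1 : pb c <= pb c' by case: hk => [|[_ [|[]]]]; slia.
    have [x [xS xl xe]] := inM_pb Mc.
    have := @pb_le (top c') x (subsetP sub _ xS); rewrite b0_top // -eb => /(_ xl).
    rewrite pb_top // xe; slia.
  by move: pc; rewrite (piv_eq eb ep) pin.
have sub' : c \subset c'.
  apply/subsetP => x xc; have := subsetP sub _ xc; rewrite /top in_setU1.
  by case/orP => // /eqP ex; move: pin; rewrite -ex xc.
apply/eqP; rewrite eqEcard sub' /=; case: hk => [|[]]; last by move=> ->.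
move=> lt; have := subset_leq_card sub'; slia.
Qed.

Lemma L7 (c : {set Pt}) (w : Pt) : bottomb c -> w \in c -> inM (top c :\ w) ->
  keyn (bot (top c :\ w)) < keyn c.
Proof.
move=> /andP [Mc pc] wc MF.
set T := top c; set F := T :\ w.
have wp : w != piv c by apply/eqP => e; move: pc; rewrite -e wc.
have pF : piv c \in F by rewrite /F in_setD1 eq_sym wp /T /top setU11.
have cF : #|F| = #|c|.
  have := cardsD1 w T; have wT : w \in T by rewrite /T /top in_setU1 wc orbT.
  rewrite wT {1}/T /top cardsU1 pc /= => e.
  by rewrite /F; move: e => /eqP; rewrite eqn_add2l => /eqP ->.
have subFT : F \subset T by apply: subsetDl.
have neF : F != set0 by apply/set0Pn; exists (piv c).
have hb : b0 c <= b0 F by rewrite -(b0_top Mc); apply: b0_sub.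
have [Md hb0 hpb hpv] := bot_props MF.
have cd : #|bot F| = #|F| - (piv F \in F) := card_bot MF.
apply: keyn_lt; rewrite hb0 hpb.
case: (ltngtP (b0 c) (b0 F)) => [lt|gt|eb]; last 1 first.
- have hp : pb c <= pb F.
    have [x [xS xl xe]] := inM_pb MF.
    have := @pb_le T x (subsetP subFT _ xS); rewrite /T b0_top // eb => /(_ xl).
    by rewrite pb_top // xe.
  case: (ltngtP (pb c) (pb F)) => [lt|gt|ep].
  + have : #|bot F| <= #|c| by slia.
    rewrite leq_eqVlt => /orP [/eqP e|]; [right; split => //; right; split => //|by left].
  + slia.
  + left; have : piv F = piv c by apply: piv_eq.
    move=> e; rewrite cd e pF cF /=.
    have : 0 < #|c| by rewrite card_gt0; case/and4P: Mc.
    by move=> h; rewrite ltn_subrL /=.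
- have : #|bot F| <= #|c| by slia.
  rewrite leq_eqVlt => /orP [/eqP e|]; [right; split => //; left; slia|by left].
- slia.
Qed.
End Chains.

Section NFunSets.
Variable m : nat.

Definition V k (t : NFun k m) : {set Pt m} := [set sval t i | i in 'I_k.+1].

Lemma nfun_diag k (t : NFun k m) i : (sval t i).1 <= (sval t i).2.
Proof. by case: t => s /= /andP [/forallP H _]. Qed.

Lemma nfun_mono k (t : NFun k m) (i j : 'I_k.+1) : i <= j -> lep (sval t i) (sval t j).
Proof. by case: t => s /= /andP [_ /forallP H] ij; have /forallP /(_ j) /implyP := H i; apply. Qed.

Lemma inV k (t : NFun k m) i : sval t i \in V t.
Proof. by apply/imsetP; exists i. Qed.

Lemma VP k (t : NFun k m) x : reflect (exists i, x = sval t i) (x \in V t).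
Proof.
apply: (iffP imsetP) => [[i _ ->]|[i ->]]; by exists i.
Qed.

Lemma V_chain k (t : NFun k m) : chainb (V t).
Proof.
apply: chainP => [x /VP [i ->]|x y /VP [i ->] /VP [j ->]]; first exact: nfun_diag.
case: (leqP i j) => ij; first by rewrite nfun_mono.
by rewrite (nfun_mono t (ltnW ij)) orbT.
Qed.

Lemma V_ne k (t : NFun k m) : V t != set0.
Proof. by apply/set0Pn; exists (sval t ord0); apply: inV. Qed.

Lemma V_act k k' (b : Dmor k' k) (t : NFun k m) : V (nfun_act b t) \subset V t.
Proof. by apply/subsetP => x /VP [i ->]; rewrite /= ffunE inV. Qed.

Lemma lep_antisym (x y : Pt m) : lep x y -> lep y x -> x = y.
Proof.
case: x y => [x1 x2] [y1 y2]; rewrite /lep /= => /andP [h1 h2] /andP [h3 h4].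
by congr pair; apply: val_inj; apply/eqP; rewrite eqn_leq ?h1 ?h2 ?h3 ?h4.
Qed.

Lemma chain_enum (T : {set Pt m}) : chainb T -> T != set0 ->
  exists n (s : NFun n m), (forall i, sval s i \in T) /\ (forall x, x \in T -> exists i, sval s i = x)
    /\ injective (sval s).
Proof.
move=> ch ne.
pose sl := sort (fun x y : Pt m => x.1 + x.2 <= y.1 + y.2) (enum T).
have ssz : size sl = #|T| by rewrite size_sort cardE.
have Tpos : 0 < #|T| by rewrite card_gt0.
have memsl : forall x, (x \in sl) = (x \in T) by move=> x; rewrite mem_sort mem_enum.
have usl : uniq sl by rewrite sort_uniq enum_uniq.
have sosl : sorted (fun x y : Pt m => x.1 + x.2 <= y.1 + y.2) sl.
  by apply: sort_sorted => x y; apply: leq_total.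
pose n := #|T|.-1.
have hn : n.+1 = #|T| by rewrite /n prednK.
pose x0 : Pt m := (ord0, ord0).
pose f := [ffun i : 'I_n.+1 => nth x0 sl i].
have fT : forall i, f i \in T.
  by move=> i; rewrite ffunE -memsl mem_nth // ssz -hn.
have fb : nfunb f.
  apply/andP; split; first by apply/forallP => i; apply: chain_diag ch (fT i).
  apply/forallP => i; apply/forallP => j; apply/implyP => ij.
  have ltr : transitive (fun x y : Pt m => x.1 + x.2 <= y.1 + y.2) by move=> a b c; apply: leq_trans.
  have hs : (nth x0 sl i).1 + (nth x0 sl i).2 <= (nth x0 sl j).1 + (nth x0 sl j).2.
    by apply: (sorted_leq_nth ltr (fun x => leqnn _) x0 sosl) => //; rewrite inE ssz -hn.
  have := chain_cmp ch (fT i) (fT j); rewrite !ffunE; case/orP => // h.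
  rewrite /lep in h *; case/andP: h => h1 h2.
  apply/andP; split; simpl in *; lia.
exists n, (exist (fun s => nfunb s) f fb); split => //; split.
- move=> x xT; have : x \in sl by rewrite memsl.
  move=> /(nthP x0) [i ilt <-]; have ilt' : i < n.+1 by rewrite hn -ssz.
  by exists (Ordinal ilt'); rewrite /= ffunE.
- move=> i j /=; rewrite !ffunE => /eqP; rewrite nth_uniq ?ssz -?hn // => /eqP; apply: val_inj.
Qed.
End NFunSets.

Section Core.
Variables (m : nat) (X' Y' : SSet) (p : SMap X' Y').
Hypothesis Hp : inner_fibration p.
Variables (g : forall k, NFun k m -> X' k) (G : SMap (NFunS m) Y').

Definition InA k (t : NFun k m) := AS (V t).

Hypothesis gnat : forall k k' (b : Dmor k' k) (t : NFun k m), InA t ->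
  g (nfun_act b t) = sact X' b (g t).
Hypothesis gp : forall k (t : NFun k m), InA t -> smap p (g t) = smap G t.

Definition Lb : seq {set Pt m} :=
  sort (fun c c' => keyn c <= keyn c') (enum [pred S : {set Pt m} | bottomb S]).

Lemma Lb_uniq : uniq Lb.
Proof. by rewrite /Lb sort_uniq enum_uniq. Qed.

Lemma Lb_mem c : (c \in Lb) = bottomb c.
Proof. by rewrite /Lb mem_sort mem_enum. Qed.

Lemma Lb_sorted i j : i <= j -> j < size Lb -> keyn (nth set0 Lb i) <= keyn (nth set0 Lb j).
Proof.
move=> ij jl.
have ltr : transitive (fun c c' : {set Pt m} => keyn c <= keyn c') by move=> a b c; apply: leq_trans.
apply: (sorted_leq_nth ltr (fun x => leqnn _) set0 _) => //; rewrite ?inE //; last by lia.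
by apply: sort_sorted => x y; apply: leq_total.
Qed.

Definition FiltS l (W : {set Pt m}) := AS W \/ exists i, i < l /\ W \subset top (nth set0 Lb i).
Definition Filt l k (t : NFun k m) := FiltS l (V t).

Lemma FiltS_sub l (W W' : {set Pt m}) : W \subset W' -> FiltS l W' -> FiltS l W.
Proof.
move=> sub [h|[i [il h]]]; [left; exact: AS_sub h|right; exists i; split => //].
exact: subset_trans sub h.
Qed.

Definition Inv l := exists h : forall k, NFun k m -> X' k,
  (forall k (t : NFun k m), InA t -> h k t = g t) /\
  (forall k k' (b : Dmor k' k) (t : NFun k m), Filt l t -> h k' (nfun_act b t) = sact X' b (h k t)) /\
  (forall k (t : NFun k m), Filt l t -> smap p (h k t) = smap G t).

Lemma Inv0 : Inv 0.
Proof.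
exists g; split => //; split.
- move=> k k' b t [h|[i [//]]]; exact: gnat.
- move=> k t [h|[i [//]]]; exact: gp.
Qed.

Lemma Inv_step l : l < size Lb -> Inv l -> Inv l.+1.
Proof.
move=> ll [h [hA [hnat hp]]].
set c := nth set0 Lb l.
have cL : c \in Lb by apply: mem_nth.
have bc : bottomb c by rewrite -Lb_mem.
have Mc : inM c by case/andP: bc.
have pc : piv c \notin c by case/andP: bc.
set T := top c.
have chT : chainb T := top_chain Mc.
have neT : T != set0 by apply/set0Pn; exists (piv c); rewrite /T /top setU11.
have [n [sg [sT [Ts sinj]]]] := chain_enum chT neT.
have [j sj] : exists j, sval sg j = piv c by apply: Ts; rewrite /T /top setU11.
have [e eS ee] := b0_ex (proj1 (andP (proj2 (andP Mc)))).
have [z [zS zl ze]] := inM_pb Mc.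
have hbp := inM_b0_pb Mc.
have cmp := inM_cmp Mc.
have [ie Hie] : exists i, sval sg i = e by apply: Ts; rewrite /T /top in_setU1 eS orbT.
have [iz Hiz] : exists i, sval sg i = z by apply: Ts; rewrite /T /top in_setU1 zS orbT.
have j0 : 0 < j.
  case: (posnP j) => // j0; exfalso.
  have : lep (sval sg j) (sval sg ie) by apply: nfun_mono; rewrite j0.
  rewrite sj Hie /lep piv1 piv2; simpl in *; lia.
have jn : j < n.
  rewrite ltn_neqAle -ltnS ltn_ord andbT; apply/eqP => jn; have : lep (sval sg iz) (sval sg j).
    by apply: nfun_mono; rewrite jn -ltnS ltn_ord.
  rewrite sj Hiz /lep piv1 piv2; simpl in *; lia.
have imP : forall k (t : NFun k m), (exists a : Dmor k n, t = nfun_act a sg) <-> V t \subset T.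
  move=> k t; split.
    move=> [a ->]; apply/subsetP => x /VP [i ->]; rewrite /= ffunE; exact: sT.
  move=> sub.
  have ex : forall i, exists l0, sval sg l0 = sval t i by move=> i; apply: Ts; apply: (subsetP sub); apply: inV.
  pose af := [ffun i => odflt ord0 [pick l0 | sval sg l0 == sval t i]].
  have afE : forall i, sval sg (af i) = sval t i.
    move=> i; rewrite /af ffunE; case: pickP => [l0 /eqP //|H]; have [l0 hl0] := ex i.
    by have := H l0; rewrite hl0 eqxx.
  have am : monob af.
    apply/forallP => i; apply/forallP => i'; apply/implyP => ii'.
    rewrite leqNgt; apply/negP => lt.
    have h1 := nfun_mono t ii'; rewrite -!afE in h1.
    have h2 := nfun_mono sg (ltnW lt).
    by have := sinj _ _ (lep_antisym h1 h2) => e'; move: lt; rewrite e' ltnn.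
  exists (exist (fun f => monob f) af am); apply: val_inj; apply/ffunP => i.
  by rewrite /= ffunE afE.
have Fcl : forall k k' (b : Dmor k' k) (t : NFun k m), Filt l t -> Filt l (nfun_act b t).
  by move=> k k' b t; apply: FiltS_sub; apply: V_act.
have sginj : forall k (a b : Dmor k n), nfun_act a sg = nfun_act b sg -> a = b.
  move=> k a b e'; apply: val_inj; apply/ffunP => i; apply: sinj.
  by have := f_equal (fun s : NFun k m => sval s i) e'; rewrite /= !ffunE.
have Fh : forall k (a : Dmor k n), Filt l (nfun_act a sg) <-> hornb j a.
  move=> k a; set W := V (nfun_act a sg).
  have WT : W \subset T by apply/imP; exists a.
  split.
  - move=> HF; apply: NNPP => nh.
    have cW : c \subset W.
      apply/subsetP => x xc.
      have [l0 hl0] : exists l0, sval sg l0 = x by apply: Ts; rewrite /T /top in_setU1 xc orbT.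
      have l0j : l0 != j by apply/eqP => e'; move: pc; rewrite -sj -e' hl0 xc.
      case: (boolP [exists i, sval a i == l0]) => [/existsP [i /eqP ai]|].
        by rewrite -hl0 -ai; apply/VP; exists i; rewrite /= ffunE.
      move=> /existsPn H; exfalso; apply: nh; apply/existsP; exists l0; rewrite l0j /=.
      by apply/forallP => i; apply: H.
    case: HF => [HA|[i [il sub]]].
      by have := inM_sup Mc cW; rewrite HA.
    have ci : c = nth set0 Lb i.
      apply: (L6 bc); first by rewrite -Lb_mem; apply: mem_nth; exact: ltn_trans il ll.
        exact: subset_trans cW sub.
      by apply: Lb_sorted => //; exact: ltnW.
    move: ci; rewrite /c => /eqP; rewrite nth_uniq ?Lb_uniq //; last exact: ltn_trans il ll.
    by move=> /eqP e'; move: il; rewrite e' ltnn.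
  - case/existsP => l0 /andP [l0j /forallP ma].
    set w := sval sg l0.
    have wT : w \in T by apply: sT.
    have wp : w != piv c by apply/eqP => e'; move: l0j; rewrite -sj in e'; rewrite (sinj _ _ e') eqxx.
    have wc : w \in c by move: wT; rewrite /T /top in_setU1 (negbTE wp).
    have wW : w \notin W.
      apply/negP => /VP [i]; rewrite /= ffunE => /sinj e'.
      by have := ma i; rewrite e' eqxx.
    have WF : W \subset T :\ w.
      apply/subsetP => x xW; rewrite in_setD1 (subsetP WT _ xW) andbT.
      by apply/eqP => e'; move: wW; rewrite -e' xW.
    apply: (FiltS_sub WF).
    case: (boolP (AS (T :\ w))) => [HA|nA]; first by left.
    have MF : inM (T :\ w).
      apply: notAS_inM => //; first by apply: chain_sub chT; apply: subsetDl.
      apply/set0Pn; have /set0Pn [x xW] := V_ne (nfun_act a sg); exists x; exact: (subsetP WF).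
    have kl := L7 bc wc MF.
    have bb := bot_bottom MF.
    right; exists (index (bot (T :\ w)) Lb); split; last first.
      by rewrite nth_index ?Lb_mem //; apply: sub_top_bot.
    rewrite ltnNge; apply/negP => li.
    have := Lb_sorted li; rewrite index_mem Lb_mem bb nth_index ?Lb_mem // => /(_ isT) hle.
    by have := leq_ltn_trans hle kl; rewrite /c ltnn.
have [h' [h'1 [h'2 h'3]]] := @horn_ext X' Y' p (NFunS m) G Hp n j j0 jn sg sginj (Filt l) Fcl Fh h hnat hp.
have Fl : forall k (t : NFun k m), Filt l.+1 t <-> Filt l t \/ exists a : Dmor k n, t = nfun_act a sg.
  move=> k t; rewrite imP; split.
    case=> [HA|[i [il sub]]]; first by left; left.
    case: (ltngtP i l) => [lt|gt|ei]; [left; right; exists i; split => //|lia|right].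
    by rewrite /T /c -ei.
  case=> [[HA|[i [il sub]]]|sub]; first by left.
    right; exists i; split => //; lia.
  by right; exists l; split.
exists h'; split; first by move=> k t HA; rewrite h'1 ?hA //; left.
split.
- by move=> k k' b t /Fl H; apply: h'2.
- by move=> k t /Fl H; apply: h'3.
Qed.

Lemma Filt_all k (t : NFun k m) : Filt (size Lb) t.
Proof.
case: (boolP (AS (V t))) => [HA|nA]; first by left.
have MW := notAS_inM (V_chain t) (V_ne t) nA.
have bb := bot_bottom MW.
right; exists (index (bot (V t)) Lb); split.
  by rewrite index_mem Lb_mem.
by rewrite nth_index ?Lb_mem //; apply: sub_top_bot.
Qed.

Lemma core_ext : exists E : SMap (NFunS m) X',
  (forall k (t : NFun k m), InA t -> smap E t = g t) /\
  (forall k (t : NFun k m), smap p (smap E t) = smap G t).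
Proof.
have : forall l, l <= size Lb -> Inv l.
  elim=> [_|l IH ll]; first exact: Inv0.
  by apply: Inv_step => //; apply: IH; lia.
move=> /(_ (size Lb) (leqnn _)) [h [hA [hnat hp]]].
have hn : forall k' k (b : Dmor k' k) (t : NFunS m k), h k' (sact (NFunS m) b t) = sact X' b (h k t).
  by move=> k' k b t; apply: hnat; apply: Filt_all.
exists (@Build_SMap (NFunS m) X' h hn); split => //= k t; apply: hp; exact: Filt_all.
Qed.
End Core.

Section Global.
Variables (X X' Y' : SSet) (p : SMap X' Y').
Hypothesis Hp : inner_fibration p.
Variables (u : SMap (ESd X) X') (v : SMap (ESd' X) Y').
Hypothesis Huv : forall k (a : ESd X k), smap p (smap u a) = smap v (smap (can_map X) a).

Definition cls k n (x : X n) (s : NFun k n) : ESd' X k :=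
  qclass (LanE NFunCo X k) (existT _ n (x, s)).

Lemma cls_rel k n' n (a : Dmor n' n) (x : X n) (s : NFun k n') :
  cls (sact X a x) s = cls x (nfun_map a s).
Proof.
apply: qclass_eq; first exact: LanE_equiv.
by apply: rst_step; exists n', n, a, x, s; split.
Qed.

Lemma uv_cls k n (f : Dmor (k + k).+1 n) (y : X n) :
  smap p (smap u (sact X f y : ESd X k)) = smap v (cls y (nfun_map f (iotak k))).
Proof. by rewrite Huv /= -cls_rel. Qed.

Definition Fam := forall n, X n -> SMap (NFunS n) X'.

Definition Hx (F : Fam) n (x : X n) k (t : NFun k n) : X' k :=
  let: existT r (s, y) := ez x in smap (F r y) (nfun_map s t).

Definition ezdim n (x : X n) := projT1 (ez x).

Lemma Hx_eq (F : Fam) n m (s : Dmor n m) (y : X m) k (t : NFun k n) :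
  surj s -> nondeg y -> Hx F (sact X s y) t = smap (F m y) (nfun_map s t).
Proof. by move=> Hs Hy; rewrite /Hx ez_eq. Qed.

Lemma Hx_nondeg (F : Fam) n (y : X n) k (t : NFun k n) :
  nondeg y -> Hx F y t = smap (F n y) t.
Proof. by move=> Hy; rewrite /Hx ez_nondeg // nfun_map_id. Qed.

Lemma Hx_nat (F : Fam) n (x : X n) k k' (b : Dmor k' k) (t : NFun k n) :
  Hx F x (nfun_act b t) = sact X' b (Hx F x t).
Proof.
rewrite /Hx; case: (ez x) => r [s y].
by rewrite nfun_map_nat -[nfun_act b _]/(sact (NFunS r) b _) smap_nat.
Qed.

Lemma ezdim_le n m (s : Dmor n m) (y : X m) : ezdim (sact X s y) <= m.
Proof.
rewrite /ezdim; have := ez_spec (sact X s y); rewrite /ez_prop.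
case: (ez _) => m' [s' y'] /= [E [Hs' Hy']].
have [d [Hd _]] := section_ex ord0 Hs'.
exact: (Hy' _ _ _ (sect_eq Hd (esym E))).
Qed.

Lemma ezdim_nonsurj n n' (b : Dmor n' n) (y : X n) : ~ surj b -> ezdim (sact X b y) < n.
Proof.
case: n b y => [|n] b y nb; first by exfalso; apply: nb; exact: surj0.
have [l Hl] := nonsurj_miss nb.
have e := @miss_factor _ _ b l (ltn_ord l) (fun i => Hl i).
by rewrite e sact_comp; apply: leq_ltn_trans (ezdim_le _ _) _.
Qed.

Definition Props (F : Fam) n (y : X n) (E : SMap (NFunS n) X') :=
  [/\ (forall k (t : NFun k n), smap p (smap E t) = smap v (cls y t)),
      (forall k (f : Dmor (k + k).+1 n), smap E (nfun_map f (iotak k)) = smap u (sact X f y : ESd X k))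
    & (forall n' (b : Dmor n' n) k (t : NFun k n'), ~ surj b ->
         smap E (nfun_map b t) = Hx F (sact X b y) t)].

Definition Valid r (F : Fam) := forall n, n < r -> forall y : X n, nondeg y -> Props F y (F n y).

Definition Agree r (F F' : Fam) := forall n, n < r -> forall y : X n, F n y = F' n y.

Lemma Hx_agree r F F' n (x : X n) k (t : NFun k n) : Agree r F F' -> ezdim x < r ->
  Hx F x t = Hx F' x t.
Proof. by rewrite /Hx /ezdim; case: (ez x) => m [s y] /= Ha Hm; rewrite Ha. Qed.

Lemma Valid_agree r F F' : Valid r F -> Agree r F F' -> Valid r F'.
Proof.
move=> HV Ha n nr y Hy; have [h1 h2 h3] := HV n nr y Hy.
rewrite -Ha //; split => // n' b k t nb; rewrite h3 //.
apply: Hx_agree Ha _; apply: leq_trans (ezdim_nonsurj y nb) _; lia.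
Qed.

Section WithValid.
Variables (r : nat) (F : Fam).
Hypothesis HV : Valid r F.

Lemma TI n (x : X n) n' (a : Dmor n' n) k (t : NFun k n') : ezdim x < r ->
  Hx F x (nfun_map a t) = Hx F (sact X a x) t.
Proof.
rewrite /ezdim; have := ez_spec x; rewrite /ez_prop /Hx.
case: (ez x) => m [s y] /= [E [Hs Hy]] Hm.
rewrite E -sact_comp -nfun_map_comp.
case: (classic (surj (Dcomp s a))) => Hsa.
  by rewrite ez_eq.
by have [_ _ h3] := HV Hm Hy; rewrite h3.
Qed.

Lemma HxA n (x : X n) k (t : NFun k n) : ezdim x < r -> smap p (Hx F x t) = smap v (cls x t).
Proof.
rewrite /ezdim; have := ez_spec x; rewrite /ez_prop /Hx.
case: (ez x) => m [s y] /= [E [Hs Hy]] Hm.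
by have [h1 _ _] := HV Hm Hy; rewrite h1 E cls_rel.
Qed.

Lemma HxB n (x : X n) k (f : Dmor (k + k).+1 n) : ezdim x < r ->
  Hx F x (nfun_map f (iotak k)) = smap u (sact X f x : ESd X k).
Proof.
rewrite /ezdim; have := ez_spec x; rewrite /ez_prop /Hx.
case: (ez x) => m [s y] /= [E [Hs Hy]] Hm.
have [_ h2 _] := HV Hm Hy.
by rewrite -nfun_map_comp h2 E sact_comp.
Qed.
End WithValid.
End Global.

Lemma iotaE1 k (i : 'I_k.+1) : nat_of_ord (sval (iotak k) i).1 = i.
Proof. by rewrite /= ffunE /= inordK //; have := ltn_ord i; lia. Qed.
Lemma iotaE2 k (i : 'I_k.+1) : nat_of_ord (sval (iotak k) i).2 = k.+1 + i.
Proof. by rewrite /= ffunE /= inordK //; have := ltn_ord i; lia. Qed.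

Lemma nfun_mapE k n n' (c : Dmor n n') (s : NFun k n) i :
  sval (nfun_map c s) i = (sval c (sval s i).1, sval c (sval s i).2).
Proof. by rewrite /= ffunE. Qed.

Lemma iota_inj k n (f f' : Dmor (k + k).+1 n) :
  nfun_map f (iotak k) = nfun_map f' (iotak k) -> f = f'.
Proof.
move=> e; apply: val_inj; apply/ffunP => idx.
have := ltn_ord idx => hidx.
case: (leqP idx k) => hk.
  have := f_equal (fun s : NFun k n => (sval s (inord idx)).1) e; rewrite !nfun_mapE.
  have -> // : (sval (iotak k) (inord idx)).1 = idx.
  by apply: val_inj; rewrite /= iotaE1 inordK.
have := f_equal (fun s : NFun k n => (sval s (inord (idx - k.+1))).2) e; rewrite !nfun_mapE.
have -> // : (sval (iotak k) (inord (idx - k.+1))).2 = idx.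
by apply: val_inj; rewrite /= iotaE2 inordK; lia.
Qed.

Section Forms.
Variable m : nat.

Lemma form_esd k (f : Dmor (k + k).+1 m) : ESdS (V (nfun_map f (iotak k))).
Proof.
apply/forall_inP => x /VP [i ->]; apply/forall_inP => y /VP [j ->].
rewrite !nfun_mapE /=; apply: (monoP (valP f)); rewrite iotaE1 iotaE2; have := ltn_ord i; lia.
Qed.

Lemma esd_form k (t : NFun k m) : ESdS (V t) -> exists f : Dmor (k + k).+1 m, t = nfun_map f (iotak k).
Proof.
move=> /forall_inP H.
have H' : forall i j, (sval t i).1 <= (sval t j).2.
  by move=> i j; have /forall_inP := H _ (inV t i); apply; apply: inV.
pose f := [ffun idx : 'I_(k + k).+2 => if idx <= k then (sval t (inord idx)).1
                                     else (sval t (inord (idx - k.+1))).2].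
have fm : monob f.
  apply/forallP => a; apply/forallP => b; apply/implyP => ab; rewrite !ffunE.
  case: ifP => ak; case: ifP => bk.
  - have hab : (inord a : 'I_k.+1) <= (inord b : 'I_k.+1).
      by rewrite (@inordK k a) ?(@inordK k b); lia.
    by have /andP [] := nfun_mono t hab.
  - exact: H'.
  - lia.
  - have hab : (inord (a - k.+1) : 'I_k.+1) <= (inord (b - k.+1) : 'I_k.+1).
      have ha := ltn_ord a; have hb := ltn_ord b.
      by rewrite (@inordK k (a - k.+1)) ?(@inordK k (b - k.+1)); lia.
    by have /andP [] := nfun_mono t hab.
exists (exist (fun f => monob f) f fm); apply: val_inj; apply/ffunP => i.
rewrite nfun_mapE; have hi := ltn_ord i.
move: (iotaE1 i) (iotaE2 i); case: (sval (iotak k) i) => a b /= ha hb.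
rewrite !ffunE ha hb ifT; last by lia.
rewrite ifF; last by lia.
have -> : (inord i : 'I_k.+1) = i by apply: val_inj; rewrite /= inordK.
have -> : (inord (k.+1 + i - k.+1) : 'I_k.+1) = i by apply: val_inj; rewrite /= inordK; lia.
by case: (sval t i).
Qed.

Lemma miss_notfull k n' (b : Dmor n' m) (t : NFun k n') (j : 'I_m.+1) :
  (forall i, sval b i != j) -> ~~ fullS (V (nfun_map b t)).
Proof.
move=> H; apply/negP => /forallP /(_ j) /exists_inP [x /VP [i ->]].
by rewrite nfun_mapE /= !(negbTE (H _)).
Qed.

Lemma notfull_miss k (t : NFun k m) : ~~ fullS (V t) ->
  exists j : 'I_m.+1, forall i, ((sval t i).1 != j) && ((sval t i).2 != j).
Proof.
move=> /forallPn [j /exists_inPn H]; exists j => i.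
by have := H _ (inV t i); rewrite negb_or.
Qed.
End Forms.

Lemma rep_of_miss k n (t : NFun k n.+1) (j : 'I_n.+2) :
  (forall i, ((sval t i).1 != j) && ((sval t i).2 != j)) ->
  t = nfun_map (cof n j) (nfun_map (coll n j) t).
Proof.
move=> H; apply: val_inj; apply/ffunP => i; rewrite !nfun_mapE /=.
have /andP [h1 h2] := H i.
rewrite !(cof_coll (ltn_ord j)) //; first by case: (sval t i).
Qed.

Definition missb k n (t : NFun k n) (j : 'I_n.+1) :=
  forall i, ((sval t i).1 != j) && ((sval t i).2 != j).

Lemma map_miss k n n' (b : Dmor n' n) (t : NFun k n') (j : 'I_n.+1) :
  (forall i, sval b i != j) -> missb (nfun_map b t) j.
Proof. by move=> H i; rewrite nfun_mapE /= !H. Qed.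

Lemma iota_vals k n (f : Dmor (k + k).+1 n) idx :
  exists i, sval f idx = (sval (nfun_map f (iotak k)) i).1 \/ sval f idx = (sval (nfun_map f (iotak k)) i).2.
Proof.
have hidx := ltn_ord idx.
case: (leqP idx k) => hk.
  exists (inord idx); left; rewrite nfun_mapE /=; congr (sval f _).
  by apply: val_inj; rewrite /= iotaE1 inordK.
exists (inord (idx - k.+1)); right; rewrite nfun_mapE /=; congr (sval f _).
by apply: val_inj; rewrite /= iotaE2 inordK; lia.
Qed.

Lemma Dmor_const_ok a n : monob ([ffun _ : 'I_a.+1 => (ord0 : 'I_n.+1)]).
Proof. by apply/forallP => i; apply/forallP => j; apply/implyP => _; rewrite !ffunE. Qed.
Definition Dconst a n : Dmor a n := exist (fun f => monob f) _ (Dmor_const_ok a n).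

Lemma ezdim_self (X : SSet) n (x : X n) : ezdim x <= n.
Proof. by rewrite -[x]sact_id; apply: ezdim_le. Qed.

Lemma InA_cases n k (t : NFun k n) : InA t ->
  (exists f : Dmor (k + k).+1 n, t = nfun_map f (iotak k)) \/
  (exists n' (b : Dmor n' n) (t' : NFun k n'), ~ surj b /\ t = nfun_map b t').
Proof.
case/orP => [/esd_form H|/notfull_miss [j hj]]; first by left.
right; case: n t j hj => [|n0] t j hj.
  exfalso; have /andP [a _] := hj ord0; move: a; clear hj; case: (sval t ord0).1 => a ha; case: j => b hb.
  move=> /eqP a1; apply: a1; apply: val_inj => /=; lia.
exists n0, (cof n0 j), (nfun_map (coll n0 j) t); split; last exact: rep_of_miss.
move=> hs; have [i hi] := hs j; have := @cof_miss n0 j i; by rewrite hi eqxx.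
Qed.


Section Step.
Variables (X X' Y' : SSet) (p : SMap X' Y').
Hypothesis Hp : inner_fibration p.
Variables (u : SMap (ESd X) X') (v : SMap (ESd' X) Y').
Hypothesis Huv : forall k (a : ESd X k), smap p (smap u a) = smap v (smap (can_map X) a).
Variables (r : nat) (F : Fam X X').
Hypothesis HV : Valid p u v r F.

Definition Can n (y : X n.+1) (j : 'I_n.+2) k (t : NFun k n.+1) :=
  Hx F (sact X (cof n j) y) (nfun_map (coll n j) t).

Lemma rep_Can n (y : X n.+1) (j : 'I_n.+2) n' (b : Dmor n' n.+1) k (t' : NFun k n') :
  n < r -> (forall i, sval b i != j) ->
  Hx F (sact X b y) t' = Can y j (nfun_map b t').
Proof.
move=> nr H; rewrite /Can.
have e := @miss_factor _ _ b j (ltn_ord j) (fun i => H i).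
rewrite [in LHS]e sact_comp -(TI HV) -?nfun_map_comp //.
by apply: leq_ltn_trans (ezdim_self _) _.
Qed.

Lemma Can_indep n (y : X n.+1) k (t : NFun k n.+1) (j1 j2 : 'I_n.+2) :
  n < r -> missb t j1 -> missb t j2 -> Can y j1 t = Can y j2 t.
Proof.
move=> nr h1 h2.
case: (j1 =P j2) => [-> //|ne].
case: n y t j1 j2 nr h1 h2 ne => [|n] y t j1 j2 nr h1 h2 ne.
  exfalso; have /andP [a1 _] := h1 ord0; have /andP [a2 _] := h2 ord0; clear h1 h2.
  move: a1 a2 ne; case: (sval t ord0).1 => a ha; case: j1 => b hb; case: j2 => c hc /=.
  move=> /eqP a1 /eqP a2 ne; apply: ne; apply: val_inj => /=.
  have ? : a <> b by move=> e; apply: a1; apply: val_inj.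
  have ? : a <> c by move=> e; apply: a2; apply: val_inj.
  lia.
pose j2' := if j2 < j1 then (j2 : nat) else (j2 : nat).-1.
have hj2' : j2' < n.+2.
  rewrite /j2'; have := ltn_ord j2; have := ltn_ord j1; case: ifP => //; lia.
pose beta := Dcomp (cof n.+1 j1) (cof n j2').
pose t'' := nfun_map (coll n j2') (nfun_map (coll n.+1 j1) t).
have vals : forall w : 'I_n.+3, nat_of_ord w != j1 -> nat_of_ord w != j2 ->
    sval beta (sval (coll n j2') (sval (coll n.+1 j1) w)) = w.
  move=> w w1 w2; rewrite DcompE (cof_coll hj2'); first by rewrite (cof_coll (ltn_ord j1)).
  rewrite collE; have := ltn_ord w; have := ltn_ord j1; have := ltn_ord j2.
  have ? : (w : nat) <> j1 by apply/eqP.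
  have ? : (w : nat) <> j2 by apply/eqP.
  have ? : (j1 : nat) <> j2 by move=> e; apply: ne; apply: val_inj.
  rewrite /j2'; case: ifP; case: ifP; lia.
have et : t = nfun_map beta t''.
  apply: val_inj; apply/ffunP => i; rewrite !nfun_mapE /=.
  have /andP [a1 b1] := h1 i; have /andP [a2 b2] := h2 i.
  by rewrite !vals //; case: (sval t i).
have m1 : forall i, sval beta i != j1.
  by move=> i; rewrite DcompE; apply: cof_miss.
have m2 : forall i, sval beta i != j2.
  move=> i; rewrite DcompE; apply/eqP => e; have := @cof_miss n j2' i.
  have := f_equal (@nat_of_ord _) e; rewrite cofE => e'.
  have := ltn_ord j1; have := ltn_ord j2.
  have ? : (j1 : nat) <> j2 by move=> e2; apply: ne; apply: val_inj.
  move: e'; rewrite /j2'; case: ifP; case: ifP; lia.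
by rewrite et -(rep_Can y t'' nr m1) -(rep_Can y t'' nr m2).
Qed.

Lemma RepIndep n (y : X n) n1 (b1 : Dmor n1 n) n2 (b2 : Dmor n2 n) k (t1 : NFun k n1) (t2 : NFun k n2) :
  n <= r -> ~ surj b1 -> ~ surj b2 -> nfun_map b1 t1 = nfun_map b2 t2 ->
  Hx F (sact X b1 y) t1 = Hx F (sact X b2 y) t2.
Proof.
case: n y b1 b2 => [|n] y b1 b2 nr s1 s2 e; first by exfalso; apply: s1; apply: surj0.
have [j1 hj1] := nonsurj_miss s1; have [j2 hj2] := nonsurj_miss s2.
rewrite (rep_Can _ _ nr hj1) (rep_Can _ _ nr hj2) e; apply: Can_indep => //.
  by rewrite -e; apply: map_miss.
exact: map_miss.
Qed.

Lemma ESdCompat n (y : X n) k (f : Dmor (k + k).+1 n) n' (b : Dmor n' n) (t' : NFun k n') :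
  n <= r -> ~ surj b -> nfun_map f (iotak k) = nfun_map b t' ->
  smap u (sact X f y : ESd X k) = Hx F (sact X b y) t'.
Proof.
case: n y f b => [|n] y f b nr sb e; first by exfalso; apply: sb; apply: surj0.
have [j hj] := nonsurj_miss sb.
have mt : missb (nfun_map f (iotak k)) j by rewrite e; apply: map_miss.
have fm : forall idx, nat_of_ord (sval f idx) != j.
  move=> idx; have [i [->|->]] := iota_vals f idx; have /andP [a1 a2] := mt i; by [].
rewrite (rep_Can _ _ nr hj) -e /Can.
have ef := @miss_factor _ _ f j (ltn_ord j) fm.
rewrite -nfun_map_comp (HxB HV); last by apply: leq_ltn_trans (ezdim_self _) _.
by rewrite -sact_comp -ef.
Qed.

Section ForY.
Variables (n : nat) (y : X n).
Hypothesis nr : n <= r.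
Hypothesis Hy : nondeg y.

Definition gdef k (t : NFun k n) : X' k :=
  match excluded_middle_informative (exists f : Dmor (k + k).+1 n, t = nfun_map f (iotak k)) with
  | left H => smap u (sact X (proj1_sig (constructive_indefinite_description _ H)) y : ESd X k)
  | right _ =>
    match excluded_middle_informative (exists q : {n' : nat & (Dmor n' n * NFun k n')%type},
          ~ surj (projT2 q).1 /\ t = nfun_map (projT2 q).1 (projT2 q).2) with
    | left H => let q := proj1_sig (constructive_indefinite_description _ H) in
                Hx F (sact X (projT2 q).1 y) (projT2 q).2
    | right _ => smap u (sact X (Dconst (k + k).+1 n) y : ESd X k)
    end
  end.

Lemma gE1 k (f : Dmor (k + k).+1 n) : gdef (nfun_map f (iotak k)) = smap u (sact X f y : ESd X k).
Proof.
rewrite /gdef; case: excluded_middle_informative => [H|nH]; last by exfalso; apply: nH; exists f.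
case: (constructive_indefinite_description _ H) => f' /= e.
by rewrite (iota_inj e).
Qed.

Lemma gE2 k n' (b : Dmor n' n) (t' : NFun k n') : ~ surj b ->
  gdef (nfun_map b t') = Hx F (sact X b y) t'.
Proof.
move=> sb; rewrite /gdef; case: excluded_middle_informative => [H|nH].
  case: (constructive_indefinite_description _ H) => f' /= e.
  exact: ESdCompat (esym e).
case: excluded_middle_informative => [H|nH2]; last first.
  by exfalso; apply: nH2; exists (existT _ n' (b, t')).
case: (constructive_indefinite_description _ H) => [[n2 [b2 t2]]] /= [s2 e2].
exact: RepIndep (esym e2).
Qed.

Lemma cls_act k k' (b : Dmor k' k) (t : NFun k n) :
  sact (ESd' X) b (cls y t) = cls y (nfun_act b t).
Proof.
rewrite /= /lan_act /cls; apply: qclass_eq; first exact: LanE_equiv.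
apply: rst_sym.
have := lan_shift_E b (qrep_class (LanE_equiv NFunCo X k) (existT _ n (y, t))).
by rewrite /lan_shift /=.
Qed.

Lemma Gnat : forall k' k (b : Dmor k' k) (t : NFunS n k),
  smap v (cls y (sact (NFunS n) b t)) = sact Y' b (smap v (cls y t)).
Proof. by move=> k' k b t; rewrite -smap_nat cls_act. Qed.

Definition Gy : SMap (NFunS n) Y' := {| smap := fun k (t : NFunS n k) => smap v (cls y t); smap_nat := Gnat |}.

Lemma gnat k k' (b : Dmor k' k) (t : NFun k n) : InA t -> gdef (nfun_act b t) = sact X' b (gdef t).
Proof.
case/InA_cases => [[f ->]|[n' [b' [t' [sb ->]]]]].
  rewrite -nfun_map_nat iota_nat -nfun_map_comp !gE1.
  by rewrite -[sact X' b _]smap_nat /= sact_comp.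
by rewrite -nfun_map_nat !gE2 // Hx_nat.
Qed.

Lemma gp k (t : NFun k n) : InA t -> smap p (gdef t) = smap Gy t.
Proof.
case/InA_cases => [[f ->]|[n' [b' [t' [sb ->]]]]].
  by rewrite gE1 /= (uv_cls Huv).
rewrite gE2 // (HxA HV) /= ?cls_rel //.
by apply: leq_trans (ezdim_nonsurj y sb) _.
Qed.

Lemma ExtY : exists E, Props p u v F y E.
Proof.
have [E [E1 E2]] := core_ext Hp gnat gp.
exists E; split.
- by move=> k t; rewrite E2.
- move=> k f; rewrite E1 ?gE1 //; apply/orP; left; exact: form_esd.
- move=> n' b k t sb; rewrite E1 ?gE2 //; apply/orP; right.
  have [j hj] := nonsurj_miss sb; exact: miss_notfull hj.
Qed.
End ForY.
End Step.

Section Final.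
Variables (X X' Y' : SSet) (p : SMap X' Y').
Hypothesis Hp : inner_fibration p.
Variables (u : SMap (ESd X) X') (v : SMap (ESd' X) Y').
Hypothesis Huv : forall k (a : ESd X k), smap p (smap u a) = smap v (smap (can_map X) a).

Lemma StepL r (F : Fam X X') : Valid p u v r F ->
  exists F' : Fam X X', Valid p u v r.+1 F' /\ Agree r F F'.
Proof.
move=> HV.
pose F' : Fam X X' := fun n y =>
  match excluded_middle_informative (exists E : SMap (NFunS n) X', n = r /\ Props p u v F y E) with
  | left H => proj1_sig (constructive_indefinite_description _ H)
  | right _ => F n y end.
have Ag : Agree r F F'.
  move=> n nr y; rewrite /F'; case: excluded_middle_informative => // H.
  by exfalso; case: (constructive_indefinite_description _ H) => E [e _]; lia.
exists F'; split => //.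
move=> n nr y Hy; case: (ltngtP n r) => [lt|gt|e].
- exact: (Valid_agree HV Ag) lt y Hy.
- lia.
- rewrite /F'; case: excluded_middle_informative => [H|nH]; last first.
    exfalso; apply: nH; have [E HE] := ExtY Hp Huv HV (n := n) y (eq_leq e).
    by exists E.
  case: (constructive_indefinite_description _ H) => E /= [_ [h1 h2 h3]].
  split => // n' b k t nb; rewrite h3 //; apply: Hx_agree Ag _.
  by rewrite -e; apply: ezdim_nonsurj.
Qed.

Lemma F0nat n (y : X n) : forall k' k (b : Dmor k' k) (t : NFunS n k),
  smap u (sact X (Dconst (k' + k').+1 n) y : ESd X k') =
  sact X' b (smap u (sact X (Dconst (k + k).+1 n) y : ESd X k)).
Proof.
move=> k' k b t; rewrite -smap_nat /= -sact_comp; congr (smap u (sact X _ y)).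
by apply: val_inj; apply/ffunP => i; rewrite DcompE /= !ffunE.
Qed.

Definition F0 : Fam X X' := fun n y =>
  @Build_SMap (NFunS n) X' (fun k _ => smap u (sact X (Dconst (k + k).+1 n) y : ESd X k)) (F0nat y).

Lemma Valid0 (F : Fam X X') : Valid p u v 0 F.
Proof. by []. Qed.

Fixpoint seqF (r : nat) : {F : Fam X X' | Valid p u v r F} :=
  match r with
  | 0 => exist _ F0 (Valid0 F0)
  | r'.+1 => let s := seqF r' in
      let c := @constructive_indefinite_description (Fam X X')
                 (fun F' => Valid p u v r'.+1 F' /\ Agree r' (sval s) F') (StepL (proj2_sig s)) in
      exist _ (proj1_sig c) (proj1 (proj2_sig c))
  end.

Lemma seq_step r : Agree r (sval (seqF r)) (sval (seqF r.+1)).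
Proof. simpl. set c := constructive_indefinite_description _ _. exact: (proj2 (proj2_sig c)). Qed.

Lemma seq_agree r r' : r <= r' -> Agree r (sval (seqF r)) (sval (seqF r')).
Proof.
elim: r' => [|r' IH] le.
  by have -> : r = 0 by lia.
case: (ltngtP r r'.+1) => [lt|gt|->]; last by move=> n _ y.
  move=> n nr y; rewrite (IH _ n nr y); last by lia.
  by apply: seq_step; lia.
lia.
Qed.

Definition Fin : Fam X X' := fun n y => sval (seqF n.+1) n y.

Lemma Fin_valid r : Valid p u v r Fin.
Proof.
apply: (Valid_agree (proj2_sig (seqF r))) => n nr y.
by rewrite /Fin (seq_agree (r := n.+1) (r' := r)).
Qed.

Definition hrep k (w : LanT NFunCo X k) : X' k := Hx Fin (projT2 w).1 (projT2 w).2.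

Lemma hrep_R k (w w' : LanT NFunCo X k) : LanR NFunCo X k w w' -> hrep w = hrep w'.
Proof.
move=> [n [m [a [x [s [-> ->]]]]]]; rewrite /hrep /=.
by rewrite (TI (@Fin_valid (ezdim x).+1)).
Qed.

Lemma hrep_E k (w w' : LanT NFunCo X k) : LanE NFunCo X k w w' -> hrep w = hrep w'.
Proof.
elim=> [t1 t2 H | t1 | t1 t2 _ IH | t1 t2 t3 _ IH1 _ IH2] //.
- exact: hrep_R.
- by rewrite IH1 IH2.
Qed.

Definition hfun k (q : ESd' X k) : X' k := hrep (qrep q).

Lemma h_cls k (w : LanT NFunCo X k) : hfun (qclass (LanE NFunCo X k) w) = hrep w.
Proof. apply: esym; apply: hrep_E; exact: qrep_class (LanE_equiv NFunCo X k) w. Qed.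

Lemma hnat : forall k' k (b : Dmor k' k) (q : ESd' X k),
  hfun (sact (ESd' X) b q) = sact X' b (hfun q).
Proof.
move=> k' k b q; rewrite /= /lan_act h_cls /hfun.
case: (qrep q) => n [x s]; rewrite /hrep /lan_shift /=.
exact: Hx_nat.
Qed.

Definition hmap : SMap (ESd' X) X' := @Build_SMap (ESd' X) X' hfun hnat.

Lemma hmap_can k (a : ESd X k) : smap hmap (smap (can_map X) a) = smap u a.
Proof.
rewrite /= /can_fun h_cls /hrep /=.
have hlt : @ezdim X (k + k).+1 a < (@ezdim X (k + k).+1 a).+1 := ltnSn _.
have e := HxB (@Fin_valid (@ezdim X (k + k).+1 a).+1) (Did (k + k).+1) hlt.
by rewrite -[iotak k](nfun_map_id) e sact_id.
Qed.

Lemma hmap_p k (q : ESd' X k) : smap p (smap hmap q) = smap v q.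
Proof.
rewrite /= /hfun -{2}(qclass_rep q).
case: (qrep q) => n [x s]; rewrite /hrep /=.
by rewrite (HxA (@Fin_valid (ezdim x).+1)) // ltnSn.
Qed.
End Final.

Theorem proposition8p23 : forall X : SSet, inner_anodyne (can_map X).
Proof.
move=> X X' Y' p Hp u v Huv.
exists (hmap Hp Huv); split.
- by move=> k a; apply: hmap_can.
- by move=> k q; apply: hmap_p.
Qed.
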